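(* Under the assumptions of the preceding theorem ( $g:\mathbb{R}^n\to\mathbb{R}^s$ of class $C^2$, $D\subset\mathbb{R}^s$ closed, $\Gamma=g^{-1}(D)$, $\bar x\in\Gamma$, (A1), (A2), $\bar x^*\in\hat N_\Gamma(\bar x)$, and $\bar\lambda$ the unique vector with $\bar\lambda\in\hat N_D(g(\bar x))$, $\nabla g(\bar x)^T\bar\lambda=\bar x^*$), for every $w\in\mathbb{R}^n$, $$\hat D^*\hat N_\Gamma(\bar x,\bar x^* )(w)=\nabla^2\langle\bar\lambda,g\rangle(\bar x)w+\nabla g(\bar x)^T\,\hat D^*\hat N_D(g(\bar x),\bar\lambda)(\nabla g(\bar x)w).$$
   Context: Standing assumptions (A1), (A2) for $g:\mathbb{R}^n\to\mathbb{R}^s$ ($C^2$), closed $D\subset\mathbb{R}^s$, $\Gamma=g^{-1}(D)$, $\bar x\in\Gamma$: (A1) There exist a closed set $\Theta\subset\mathbb{R}^d$, a twice continuously differentiable mapping $h:\mathbb{R}^s\to\mathbb{R}^d$ and a neighborhood $\mathcal V$ of $g(\bar x)$ such that $\nabla h(g(\bar x))$ is surjective and $D\cap\mathcal V=\{z\in\mathcal V\mid h(z)\in\Theta\}$. (A2) $\operatorname{range}\nabla g(\bar x)+\ker\nabla h(g(\bar x))=\mathbb{R}^s$. Regular normal cone $\hat N_A(\bar a)=(T_A(\bar a))^\circ$ with $T_A(\bar a)=\limsup_{t\searrow0}(A-\bar a)/t$. For a multifunction $F:\mathbb{R}^n\rightrightarrows\mathbb{R}^z$ with $(\bar u,\bar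 v)\in\operatorname{gph}F$, the regular coderivative is $\hat D^*F(\bar u,\bar v)(v^* )=\{u^*\mid (u^*,-v^* )\in\hat N_{\operatorname{gph}F}(\bar u,\bar v)\}$. $\nabla^2\langle\lambda,g\rangle(x)$ is the Hessian of $x\mapsto\langle\lambda,g(x)\rangle$. *)

(* Defs.v *)
From Stdlib Require Import Reals.
From mathcomp Require Import all_boot.
Set Implicit Arguments. Unset Strict Implicit.

Local Open Scope R_scope.

Definition vec (I : finType) := I -> R.
Definition mat (I J : finType) := I -> J -> R.   (* linear maps vec J -> vec I *)

Definition vadd {I : finType} (u v : vec I) : vec I := fun i => u i + v i.
Definition vsub {I : finType} (u v : vec I) : vec I := fun i => u i - v i.
Definition vopp {I : finType} (u : vec I) : vec I := fun i => - u i.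
Definition vscale {I : finType} (t : R) (u : vec I) : vec I := fun i => t * u i.
Definition vzero {I : finType} : vec I := fun _ => 0.

Definition dot {I : finType} (u v : vec I) : R := \big[Rplus/0]_(i : I) (u i * v i).
Definition vnorm {I : finType} (u : vec I) : R := sqrt (dot u u).

Definition mulmv {I J : finType} (A : mat I J) (v : vec J) : vec I :=
  fun i => \big[Rplus/0]_(j : J) (A i j * v j).
Definition mulTmv {I J : finType} (A : mat I J) (y : vec I) : vec J :=
  fun j => \big[Rplus/0]_(i : I) (A i j * y i).

Definition is_open {I : finType} (A : vec I -> Prop) : Prop :=
  forall x, A x -> exists r, 0 < r /\ forall y, vnorm (vsub y x) < r -> A y.
Definition is_closed {I : finType} (A : vec I -> Prop) : Prop :=
  is_open (fun x => ~ A x).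
Definition is_neighborhood {I : finType} (V : vec I -> Prop) (x : vec I) : Prop :=
  exists r, 0 < r /\ forall y, vnorm (vsub y x) < r -> V y.

Definition seq_cv {I : finType} (u : nat -> vec I) (l : vec I) : Prop :=
  forall eps, 0 < eps -> exists N, forall k, (N <= k)%nat -> vnorm (vsub (u k) l) < eps.

Definition cont_at {I : finType} (f : vec I -> R) (x : vec I) : Prop :=
  forall eps, 0 < eps -> exists delta, 0 < delta /\
    forall y, vnorm (vsub y x) < delta -> Rabs (f y - f x) < eps.

Definition deriv_at {I J : finType} (f : vec I -> vec J) (A : mat J I) (x : vec I) : Prop :=
  forall eps, 0 < eps -> exists delta, 0 < delta /\
    forall y, vnorm (vsub y x) < delta ->
      vnorm (vsub (vsub (f y) (f x)) (mulmv A (vsub y x))) <= eps * vnorm (vsub y x).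

(* gradient of a scalar function (scalars = vec unit) *)
Definition grad_at {I : finType} (f : vec I -> R) (v : vec I) (x : vec I) : Prop :=
  deriv_at (fun y (_ : unit) => f y) (fun (_ : unit) j => v j) x.

Definition is_hessian {I : finType} (f : vec I -> R) (H : mat I I) (x : vec I) : Prop :=
  exists G : vec I -> vec I, (forall y, grad_at f (G y) y) /\ deriv_at G H x.

Definition C2 {I J : finType} (f : vec I -> vec J) : Prop :=
  exists (Jf : vec I -> mat J I) (K : vec I -> J -> mat I I),
    (forall x, deriv_at f (Jf x) x) /\
    (forall x k, deriv_at (fun y j => Jf y k j) (K x k) x) /\
    (forall x k i j, cont_at (fun y => K y k i j) x).

(* tangent cone T_A(a) = limsup_{t \searrow 0} (A - a)/t (sequential outer limit) *)
Definition tangent_cone {I : finType} (A : vec I -> Prop) (a : vec I) (w : vec I) : Prop :=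
  exists (t : nat -> R) (wk : nat -> vec I),
    (forall k, 0 < t k) /\ Un_cv t 0 /\ seq_cv wk w /\
    (forall k, A (vadd a (vscale (t k) (wk k)))).

Definition polar {I : finType} (K : vec I -> Prop) (v : vec I) : Prop :=
  forall w, K w -> dot v w <= 0.

(* regular normal cone, empty outside A *)
Definition regular_normal {I : finType} (A : vec I -> Prop) (a : vec I) (v : vec I) : Prop :=
  A a /\ polar (tangent_cone A a) v.

(* graph of a multifunction, as a subset of R^n x R^z = vec (I + J) *)
Definition vpair {I J : finType} (u : vec I) (v : vec J) : vec (I + J)%type :=
  fun k => match k with inl i => u i | inr j => v j end.
Definition gph {I J : finType} (F : vec I -> vec J -> Prop) : vec (I + J)%type -> Prop :=
  fun p => F (fun i => p (inl i)) (fun j => p (inr j)).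

(* regular coderivative: ustar \in \hat D^* F(u,v)(vstar) *)
Definition regular_coderiv {I J : finType} (F : vec I -> vec J -> Prop)
    (u : vec I) (v : vec J) (vstar : vec J) (ustar : vec I) : Prop :=
  regular_normal (gph F) (vpair u v) (vpair ustar (vopp vstar)).

(* Main.v *)
Require Import Defs.
From Stdlib Require Import Reals.
From HB Require Import structures.
From Stdlib Require Import Lra FunctionalExtensionality ClassicalEpsilon Classical.
From mathcomp Require Import all_boot.
Set Implicit Arguments. Unset Strict Implicit.
Local Open Scope R_scope.

HB.instance Definition _ := Monoid.isComLaw.Build R 0 Rplus (fun a b c => esym (Rplus_assoc a b c)) Rplus_comm Rplus_0_l.
HB.instance Definition _ := Monoid.isComLaw.Build R 1 Rmult (fun a b c => esym (Rmult_assoc a b c)) Rmult_comm Rmult_1_l.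
HB.instance Definition _ := Monoid.isMulLaw.Build R 0 Rmult Rmult_0_l Rmult_0_r.
HB.instance Definition _ := Monoid.isAddLaw.Build R Rmult Rplus Rmult_plus_distr_r Rmult_plus_distr_l.

Section Sums.
Variable I : finType.

Lemma sum_le (F G : I -> R) : (forall i, F i <= G i) ->
  \big[Rplus/0]_(i : I) F i <= \big[Rplus/0]_(i : I) G i.
Proof. move=> H; apply: (big_ind2 (fun a b => a <= b)) => //; [lra | move=> *; lra]. Qed.

Lemma sum_ge0 (F : I -> R) : (forall i, 0 <= F i) -> 0 <= \big[Rplus/0]_(i : I) F i.
Proof. move=> H; apply: (big_ind (fun a => 0 <= a)) => //; [lra| move=> *; lra]. Qed.

Lemma sum_abs (F : I -> R) : Rabs (\big[Rplus/0]_(i : I) F i) <= \big[Rplus/0]_(i : I) Rabs (F i).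
Proof.
apply: (big_ind2 (fun a b => Rabs a <= b)).
- rewrite Rabs_R0; lra.
- move=> a b c e H1 H2. apply: Rle_trans (Rabs_triang _ _) _. lra.
- move=> i _; lra.
Qed.

Lemma sum_add (F G : I -> R) : \big[Rplus/0]_(i : I) (F i + G i) =
  \big[Rplus/0]_(i : I) F i + \big[Rplus/0]_(i : I) G i.
Proof. exact: big_split. Qed.

Lemma sum_scal (c : R) (F : I -> R) : \big[Rplus/0]_(i : I) (c * F i) = c * \big[Rplus/0]_(i : I) F i.
Proof. by rewrite big_distrr. Qed.

Lemma sum_scalr (c : R) (F : I -> R) : \big[Rplus/0]_(i : I) (F i * c) = (\big[Rplus/0]_(i : I) F i) * c.
Proof. by rewrite big_distrl. Qed.

Lemma sum_opp (F : I -> R) : \big[Rplus/0]_(i : I) (- F i) = - \big[Rplus/0]_(i : I) F i.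
Proof.
transitivity (\big[Rplus/0]_(i : I) (-1 * F i)).
  apply: eq_bigr => i _; ring.
rewrite sum_scal; ring.
Qed.

Lemma sum_sub (F G : I -> R) : \big[Rplus/0]_(i : I) (F i - G i) =
  \big[Rplus/0]_(i : I) F i - \big[Rplus/0]_(i : I) G i.
Proof. rewrite /Rminus sum_add sum_opp //. Qed.

Lemma sum_ext (F G : I -> R) : (forall i, F i = G i) ->
  \big[Rplus/0]_(i : I) F i = \big[Rplus/0]_(i : I) G i.
Proof. move=> H; apply: eq_bigr => i _; exact: H. Qed.

Lemma sum_zero : \big[Rplus/0]_(i : I) (0:R) = 0.
Proof. by rewrite big1. Qed.

Lemma sum_single (F : I -> R) j : (forall i, 0 <= F i) -> F j <= \big[Rplus/0]_(i : I) F i.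
Proof.
move=> H. rewrite (bigD1 j) //=.
have : 0 <= \big[Rplus/0]_(i | i != j) F i.
  apply: (big_ind (fun a => 0 <= a)) => //; [lra| move=> *; lra].
lra.
Qed.

Lemma sum_delta (F : I -> R) j : \big[Rplus/0]_(i : I) (if i == j then F i else 0) = F j.
Proof.
rewrite (bigD1 j) //= eqxx big1 ?Rplus_0_r // => i /negPf -> //.
Qed.

Lemma sum_delta' (F : I -> R) j : \big[Rplus/0]_(i : I) (if j == i then F i else 0) = F j.
Proof.
rewrite -(sum_delta F j); apply: sum_ext => i; by rewrite eq_sym.
Qed.

Lemma sum_const (c : R) : \big[Rplus/0]_(i : I) c = INR #|I| * c.
Proof.
rewrite big_const. elim: #|I| => [|k IH]; first (simpl; ring).
rewrite iterS IH S_INR; ring.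
Qed.

End Sums.

Lemma sum_swap (I J : finType) (F : I -> J -> R) :
  \big[Rplus/0]_(i : I) \big[Rplus/0]_(j : J) F i j =
  \big[Rplus/0]_(j : J) \big[Rplus/0]_(i : I) F i j.
Proof. exact: exchange_big. Qed.

Lemma sum_sumType (I J : finType) (F : (I + J)%type -> R) :
  \big[Rplus/0]_(k : (I + J)%type) F k =
  \big[Rplus/0]_(i : I) F (inl i) + \big[Rplus/0]_(j : J) F (inr j).
Proof. exact: big_sumType. Qed.

Definition n1 {I : finType} (u : vec I) : R := \big[Rplus/0]_(i : I) Rabs (u i).
Definition mnorm {I J : finType} (A : mat I J) : R :=
  \big[Rplus/0]_(i : I) \big[Rplus/0]_(j : J) Rabs (A i j).
Definition mmul {K J I : finType} (B : mat K J) (A : mat J I) : mat K I :=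
  fun k i => \big[Rplus/0]_(j : J) (B k j * A j i).
Definition madd {I J : finType} (A B : mat I J) : mat I J := fun i j => A i j + B i j.
Definition msub {I J : finType} (A B : mat I J) : mat I J := fun i j => A i j - B i j.
Definition mtr {I J : finType} (A : mat I J) : mat J I := fun j i => A i j.
Definition KI (I : finType) : R := INR #|I| + 1.
Definition ev {I : finType} (j : I) : vec I := fun i => if i == j then 1 else 0.

Lemma vext {I : finType} (u v : vec I) : (forall i, u i = v i) -> u = v.
Proof. move=> H; apply: functional_extensionality; exact: H. Qed.

Lemma KI_pos (I : finType) : 0 < KI I.
Proof. rewrite /KI; have := pos_INR #|I|; lra. Qed.

Section Norms.
Variable I : finType.
Implicit Types u v w : vec I.

Lemma n1_ge0 u : 0 <= n1 u.
Proof. apply: sum_ge0 => i; exact: Rabs_pos. Qed.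

Lemma n1_coord u i : Rabs (u i) <= n1 u.
Proof. rewrite /n1; apply: (@sum_single _ (fun i => Rabs (u i))) => j; exact: Rabs_pos. Qed.

Lemma n1_add u v : n1 (vadd u v) <= n1 u + n1 v.
Proof. rewrite /n1 -sum_add; apply: sum_le => i; exact: Rabs_triang. Qed.

Lemma n1_sub u v : n1 (vsub u v) <= n1 u + n1 v.
Proof. rewrite /n1 -sum_add; apply: sum_le => i; rewrite /vsub; exact: Rabs_triang_inv2 || (unfold Rminus; apply: Rle_trans (Rabs_triang _ _) _; rewrite Rabs_Ropp; lra). Qed.

Lemma n1_scale t u : n1 (vscale t u) = Rabs t * n1 u.
Proof. rewrite /n1 -sum_scal; apply: sum_ext => i; exact: Rabs_mult. Qed.

Lemma n1_opp u : n1 (vopp u) = n1 u.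
Proof. apply: sum_ext => i; exact: Rabs_Ropp. Qed.

Lemma n1_subC u v : n1 (vsub u v) = n1 (vsub v u).
Proof. apply: sum_ext => i; rewrite /vsub; exact: Rabs_minus_sym. Qed.

Lemma n1_tri u v w : n1 (vsub u w) <= n1 (vsub u v) + n1 (vsub v w).
Proof.
rewrite /n1 -sum_add; apply: sum_le => i; rewrite /vsub.
replace (u i - w i) with ((u i - v i) + (v i - w i)) by ring; exact: Rabs_triang.
Qed.

Lemma n1_zero : n1 (@vzero I) = 0.
Proof. rewrite /n1 /vzero; under eq_bigr do rewrite Rabs_R0; exact: sum_zero. Qed.

Lemma n1_eq0 u : n1 u = 0 -> u = vzero.
Proof.
move=> H; apply: vext => i; have := n1_coord u i; rewrite H /vzero => Hi.
have := Rabs_pos (u i) => Hp. have : Rabs (u i) = 0 by lra. rewrite /Rabs; case: Rcase_abs => _; lra.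
Qed.

Lemma n1_le_eq0 u : (forall e, 0 < e -> n1 u <= e) -> u = vzero.
Proof.
move=> H; apply: n1_eq0; have := n1_ge0 u => H0.
case: (Rle_lt_dec (n1 u) 0) => Hc; first lra.
have := H (n1 u / 2) ltac:(lra); lra.
Qed.

Lemma dot_self u : dot u u = \big[Rplus/0]_(i : I) (Rabs (u i) * Rabs (u i)).
Proof. apply: sum_ext => i; rewrite -Rabs_mult Rabs_right //; apply: Rle_ge; nra. Qed.

Lemma dot_self_ge0 u : 0 <= dot u u.
Proof. rewrite dot_self; apply: sum_ge0 => i; have := Rabs_pos (u i); nra. Qed.

Lemma vnorm_ge0 u : 0 <= vnorm u.
Proof. exact: sqrt_pos. Qed.

Lemma vnorm_le_n1 u : vnorm u <= n1 u.
Proof.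
rewrite /vnorm -(sqrt_square (n1 u)); last exact: n1_ge0.
apply: sqrt_le_1_alt. rewrite dot_self /n1 -sum_scalr.
apply: sum_le => i; apply: Rmult_le_compat_l; first exact: Rabs_pos.
exact: n1_coord.
Qed.

Lemma coord_le_vnorm u i : Rabs (u i) <= vnorm u.
Proof.
rewrite -sqrt_Rsqr_abs /vnorm; apply: sqrt_le_1_alt; rewrite /Rsqr.
rewrite /dot. apply: (@sum_single _ (fun i => u i * u i)) => j; nra.
Qed.

Lemma n1_le_vnorm u : n1 u <= KI I * vnorm u.
Proof.
apply: Rle_trans (_ : \big[Rplus/0]_(i : I) vnorm u <= _).
  apply: sum_le => i; exact: coord_le_vnorm.
rewrite sum_const /KI; have := vnorm_ge0 u; nra.
Qed.

Lemma dot_sym u v : dot u v = dot v u.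
Proof. apply: sum_ext => i; ring. Qed.

Lemma dot_bound u v : Rabs (dot u v) <= n1 u * n1 v.
Proof.
apply: Rle_trans (sum_abs _) _. rewrite /n1 -sum_scalr.
apply: sum_le => i; rewrite Rabs_mult; apply: Rmult_le_compat_l; first exact: Rabs_pos.
exact: n1_coord.
Qed.

Lemma dot_addl u v w : dot (vadd u v) w = dot u w + dot v w.
Proof. rewrite /dot -sum_add; apply: sum_ext => i; rewrite /vadd; ring. Qed.
Lemma dot_addr u v w : dot w (vadd u v) = dot w u + dot w v.
Proof. rewrite /dot -sum_add; apply: sum_ext => i; rewrite /vadd; ring. Qed.
Lemma dot_subl u v w : dot (vsub u v) w = dot u w - dot v w.
Proof. rewrite /dot -sum_sub; apply: sum_ext => i; rewrite /vsub; ring. Qed.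
Lemma dot_subr u v w : dot w (vsub u v) = dot w u - dot w v.
Proof. rewrite /dot -sum_sub; apply: sum_ext => i; rewrite /vsub; ring. Qed.
Lemma dot_scalel t u w : dot (vscale t u) w = t * dot u w.
Proof. rewrite /dot -sum_scal; apply: sum_ext => i; rewrite /vscale; ring. Qed.
Lemma dot_scaler t u w : dot w (vscale t u) = t * dot w u.
Proof. rewrite /dot -sum_scal; apply: sum_ext => i; rewrite /vscale; ring. Qed.
Lemma dot_oppl u w : dot (vopp u) w = - dot u w.
Proof. rewrite /dot -sum_opp; apply: sum_ext => i; rewrite /vopp; ring. Qed.
Lemma dot_zerol w : dot (@vzero I) w = 0.
Proof. rewrite /dot big1 // => i _; rewrite /vzero; ring. Qed.
Lemma dot_zeror w : dot w (@vzero I) = 0.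
Proof. rewrite /dot big1 // => i _; rewrite /vzero; ring. Qed.
Lemma dot_ev u j : dot u (ev j) = u j.
Proof.
rewrite /dot -(sum_delta u j); apply: sum_ext => i; rewrite /ev; case: (i == j); ring.
Qed.

End Norms.

Section Mats.
Variables I J K : finType.

Lemma mnorm_ge0 (A : mat I J) : 0 <= mnorm A.
Proof. apply: sum_ge0 => i; apply: sum_ge0 => j; exact: Rabs_pos. Qed.

Lemma mulmv_bound (A : mat I J) (v : vec J) : n1 (mulmv A v) <= mnorm A * n1 v.
Proof.
rewrite /n1 /mnorm -sum_scalr; apply: sum_le => i.
apply: Rle_trans (sum_abs _) _. rewrite -sum_scalr; apply: sum_le => j.
rewrite Rabs_mult; apply: Rmult_le_compat_l; first exact: Rabs_pos.
exact: n1_coord.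
Qed.

Lemma mulTmv_bound (A : mat I J) (y : vec I) : n1 (mulTmv A y) <= mnorm A * n1 y.
Proof.
rewrite /n1 /mnorm sum_swap -sum_scalr; apply: sum_le => j.
apply: Rle_trans (sum_abs _) _. rewrite -sum_scalr; apply: sum_le => i.
rewrite Rabs_mult; apply: Rmult_le_compat_l; first exact: Rabs_pos.
exact: n1_coord.
Qed.

Lemma mulmv_add (A : mat I J) u v : mulmv A (vadd u v) = vadd (mulmv A u) (mulmv A v).
Proof. apply: vext => i; rewrite /mulmv /vadd -sum_add; apply: sum_ext => j; ring. Qed.
Lemma mulmv_sub (A : mat I J) u v : mulmv A (vsub u v) = vsub (mulmv A u) (mulmv A v).
Proof. apply: vext => i; rewrite /mulmv /vsub -sum_sub; apply: sum_ext => j; ring. Qed.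
Lemma mulmv_scale (A : mat I J) t u : mulmv A (vscale t u) = vscale t (mulmv A u).
Proof. apply: vext => i; rewrite /mulmv /vscale -sum_scal; apply: sum_ext => j; ring. Qed.
Lemma mulmv_opp (A : mat I J) u : mulmv A (vopp u) = vopp (mulmv A u).
Proof. apply: vext => i; rewrite /mulmv /vopp -sum_opp; apply: sum_ext => j; ring. Qed.
Lemma mulmv_zero (A : mat I J) : mulmv A vzero = vzero.
Proof. apply: vext => i; rewrite /mulmv /vzero big1 // => j _; ring. Qed.
Lemma mulmv_madd (A B : mat I J) u : mulmv (madd A B) u = vadd (mulmv A u) (mulmv B u).
Proof. apply: vext => i; rewrite /mulmv /vadd -sum_add; apply: sum_ext => j; rewrite /madd; ring. Qed.
Lemma mulmv_msub (A B : mat I J) u : mulmv (msub A B) u = vsub (mulmv A u) (mulmv B u).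
Proof. apply: vext => i; rewrite /mulmv /vsub -sum_sub; apply: sum_ext => j; rewrite /msub; ring. Qed.

Lemma mulTmv_mtr (A : mat I J) y : mulTmv A y = mulmv (mtr A) y.
Proof. by []. Qed.
Lemma mnorm_mtr (A : mat I J) : mnorm (mtr A) = mnorm A.
Proof. by rewrite /mnorm sum_swap. Qed.

Lemma dot_mulmv (A : mat I J) v y : dot (mulmv A v) y = dot v (mulTmv A y).
Proof.
rewrite /dot /mulmv /mulTmv.
transitivity (\big[Rplus/0]_(i : I) \big[Rplus/0]_(j : J) (A i j * v j * y i)).
  apply: sum_ext => i; rewrite -sum_scalr; apply: sum_ext => j; ring.
rewrite sum_swap; apply: sum_ext => j; rewrite -sum_scal; apply: sum_ext => i; ring.
Qed.

Lemma mulmv_mmul (B : mat K J) (A : mat J I) v : mulmv (mmul B A) v = mulmv B (mulmv A v).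
Proof.
apply: vext => k; rewrite /mulmv /mmul.
transitivity (\big[Rplus/0]_(i : I) \big[Rplus/0]_(j : J) (B k j * A j i * v i)).
  apply: sum_ext => i; rewrite -sum_scalr; apply: sum_ext => j; ring.
rewrite sum_swap; apply: sum_ext => j; rewrite -sum_scal; apply: sum_ext => i; ring.
Qed.

Lemma mulTmv_mmul (B : mat K J) (A : mat J I) y : mulTmv (mmul B A) y = mulTmv A (mulTmv B y).
Proof.
apply: vext => i; rewrite /mulTmv /mmul.
transitivity (\big[Rplus/0]_(k : K) \big[Rplus/0]_(j : J) (B k j * A j i * y k)).
  apply: sum_ext => k; rewrite -sum_scalr; apply: sum_ext => j; ring.
rewrite sum_swap; apply: sum_ext => j; rewrite -sum_scal; apply: sum_ext => k; ring.
Qed.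

Lemma mulmv_ev (A : mat I J) j : mulmv A (ev j) = fun i => A i j.
Proof.
apply: vext => i; rewrite /mulmv -(sum_delta' (fun j => A i j) j); apply: sum_ext => k.
rewrite /ev eq_sym; case: (j == k); ring.
Qed.

Lemma vsum_ev (v : vec J) : v = fun i => \big[Rplus/0]_(j : J) (v j * ev j i).
Proof.
apply: vext => i; rewrite -(sum_delta' v i); apply: sum_ext => j; rewrite /ev.
case: (i == j); ring.
Qed.

End Mats.

Lemma rinv_exists (I J : finType) (A : mat J I) :
  (forall y : vec J, exists z : vec I, mulmv A z = y) ->
  exists R : mat I J, forall y, mulmv A (mulmv R y) = y.
Proof.
move=> H.
pose z := fun j => proj1_sig (constructive_indefinite_description _ (H (ev j))).
have Hz : forall j, mulmv A (z j) = ev j.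
  move=> j; exact: (proj2_sig (constructive_indefinite_description _ (H (ev j)))).
exists (fun i j => z j i) => y.
rewrite -mulmv_mmul; apply: vext => k; rewrite /mulmv /mmul.
transitivity ((fun i => \big[Rplus/0]_(j : J) (y j * ev j i)) k); last by symmetry; exact: (f_equal (fun f => f k) (vsum_ev y)).
cbv beta; apply: sum_ext => j.
have E := f_equal (fun f => f k) (Hz j); rewrite /mulmv in E; rewrite E; ring.
Qed.

Definition D1 {I J : finType} (f : vec I -> vec J) (A : mat J I) (x : vec I) : Prop :=
  forall eps, 0 < eps -> exists delta, 0 < delta /\
    forall y, n1 (vsub y x) < delta ->
      n1 (vsub (vsub (f y) (f x)) (mulmv A (vsub y x))) <= eps * n1 (vsub y x).

Definition contv {I J : finType} (f : vec I -> vec J) (x : vec I) : Prop :=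
  forall eps, 0 < eps -> exists delta, 0 < delta /\
    forall y, n1 (vsub y x) < delta -> n1 (vsub (f y) (f x)) < eps.

Definition contm {I J K : finType} (M : vec I -> mat J K) (x : vec I) : Prop :=
  forall eps, 0 < eps -> exists delta, 0 < delta /\
    forall y, n1 (vsub y x) < delta -> mnorm (msub (M y) (M x)) < eps.

Definition cvn {I : finType} (u : nat -> vec I) (l : vec I) : Prop :=
  forall eps, 0 < eps -> exists N, forall k, (N <= k)%nat -> n1 (vsub (u k) l) < eps.

Lemma deriv_D1 (I J : finType) (f : vec I -> vec J) A x : deriv_at f A x <-> D1 f A x.
Proof.
have KIp := KI_pos I; have KJp := KI_pos J.
split=> H eps Heps.
- have [d [Hd Hy]] := H (eps / KI J) ltac:(apply: Rdiv_lt_0_compat; lra).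
  exists d; split=> // y Hyx.
  have Hv : vnorm (vsub y x) < d by apply: Rle_lt_trans (vnorm_le_n1 _) Hyx.
  have := Hy y Hv. set E := vsub _ _ => HE.
  apply: Rle_trans (n1_le_vnorm E) _.
  apply: Rle_trans (_ : KI J * (eps / KI J * vnorm (vsub y x)) <= _).
    apply: Rmult_le_compat_l => //; lra.
  have := vnorm_le_n1 (vsub y x); have := vnorm_ge0 (vsub y x) => *.
  replace (KI J * (eps / KI J * vnorm (vsub y x))) with (eps * vnorm (vsub y x)) by (field; lra).
  apply: Rmult_le_compat_l; lra.
- have [d [Hd Hy]] := H (eps / KI I) ltac:(apply: Rdiv_lt_0_compat; lra).
  exists (d / KI I); split; first by apply: Rdiv_lt_0_compat; lra.
  move=> y Hyx.
  have Hn : n1 (vsub y x) < d.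
    apply: Rle_lt_trans (n1_le_vnorm _) _.
    have : KI I * vnorm (vsub y x) < KI I * (d / KI I) by apply: Rmult_lt_compat_l.
    replace (KI I * (d / KI I)) with d by (field; lra). lra.
  have := Hy y Hn. set E := vsub _ _ => HE.
  apply: Rle_trans (vnorm_le_n1 E) _. apply: Rle_trans HE _.
  have := n1_le_vnorm (vsub y x); have := vnorm_ge0 (vsub y x) => *.
  replace (eps * vnorm (vsub y x)) with (eps / KI I * (KI I * vnorm (vsub y x))) by (field; lra).
  apply: Rmult_le_compat_l => //; apply: Rlt_le; apply: Rdiv_lt_0_compat; lra.
Qed.

Lemma seq_cvn (I : finType) (u : nat -> vec I) l : seq_cv u l <-> cvn u l.
Proof.
have KIp := KI_pos I.
split=> H eps Heps.
- have [N HN] := H (eps / KI I) ltac:(apply: Rdiv_lt_0_compat; lra).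
  exists N => k Hk; have := HN k Hk => Hv.
  apply: Rle_lt_trans (n1_le_vnorm _) _.
  have : KI I * vnorm (vsub (u k) l) < KI I * (eps / KI I) by apply: Rmult_lt_compat_l.
  replace (KI I * (eps / KI I)) with eps by (field; lra). lra.
- have [N HN] := H eps Heps. exists N => k Hk.
  exact: Rle_lt_trans (vnorm_le_n1 _) (HN k Hk).
Qed.

Lemma fin_delta (K : finType) (P : K -> R -> Prop) :
  (forall k d d', 0 < d' <= d -> P k d -> P k d') ->
  (forall k, exists d, 0 < d /\ P k d) ->
  exists d, 0 < d /\ forall k, P k d.
Proof.
move=> Hm H.
suff : forall s : seq K, exists d, 0 < d /\ forall k, k \in s -> P k d.
  move=> /(_ (enum K)) [d [Hd Hk]]; exists d; split=> // k; apply: Hk; by rewrite mem_enum.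
elim=> [|a s [d [Hd IH]]]; first by exists 1; split=> //; lra.
have [da [Hda Pa]] := H a.
exists (Rmin d da); split; first by apply: Rmin_glb_lt.
move=> k; rewrite inE => /orP [/eqP ->|Hk].
- apply: Hm Pa; split; [exact: Rmin_glb_lt | exact: Rmin_r].
- apply: Hm (IH k Hk); split; [exact: Rmin_glb_lt | exact: Rmin_l].
Qed.

Lemma fin_N (K : finType) (P : K -> nat -> Prop) :
  (forall k N N', (N <= N')%nat -> P k N -> P k N') ->
  (forall k, exists N, P k N) -> exists N, forall k, P k N.
Proof.
move=> Hm H.
suff : forall s : seq K, exists N, forall k, k \in s -> P k N.
  move=> /(_ (enum K)) [N HN]; exists N => k; apply: HN; by rewrite mem_enum.
elim=> [|a s [N IH]]; first by exists 0%nat.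
have [Na Pa] := H a.
exists (maxn N Na) => k; rewrite inE => /orP [/eqP ->|Hk].
- apply: Hm Pa; exact: leq_maxr.
- apply: Hm (IH k Hk); exact: leq_maxl.
Qed.

Section Basic.
Variables I J K : finType.

Lemma D1_cont (f : vec I -> vec J) A x : D1 f A x -> contv f x.
Proof.
move=> H eps Heps.
have [d [Hd Hy]] := H 1 Rlt_0_1.
have Hm := mnorm_ge0 A.
exists (Rmin d (eps / (mnorm A + 2))); split.
  apply: Rmin_glb_lt => //; apply: Rdiv_lt_0_compat; lra.
move=> y Hyx.
have H1 : n1 (vsub y x) < d by apply: Rlt_le_trans Hyx (Rmin_l _ _).
have H2 : n1 (vsub y x) < eps / (mnorm A + 2) by apply: Rlt_le_trans Hyx (Rmin_r _ _).
have := Hy y H1.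
set E := vsub (vsub _ _) _ => HE.
have -> : vsub (f y) (f x) = vadd E (mulmv A (vsub y x)).
  apply: vext => i; rewrite /E /vadd /vsub; ring.
apply: Rle_lt_trans (n1_add _ _) _.
have := mulmv_bound A (vsub y x); have := n1_ge0 (vsub y x) => *.
have : n1 (vsub y x) * (mnorm A + 2) < eps.
  have := Rmult_lt_compat_r (mnorm A + 2) _ _ ltac:(lra) H2.
  replace (eps / (mnorm A + 2) * (mnorm A + 2)) with eps by (field; lra). done.
nra.
Qed.

Lemma D1_ext (f g : vec I -> vec J) A x : (forall y, f y = g y) -> D1 f A x -> D1 g A x.
Proof. move=> E; have -> : g = f by apply: functional_extensionality => y; rewrite E. done. Qed.

Lemma n1_ev (j : I) : n1 (ev j) = 1.
Proof.
rewrite /n1 -(sum_delta (fun _ => 1) j); apply: sum_ext => i; rewrite /ev.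
case: (i == j); rewrite ?Rabs_R1 ?Rabs_R0 //.
Qed.

Lemma D1_unique (f : vec I -> vec J) A B x : D1 f A x -> D1 f B x -> A = B.
Proof.
move=> HA HB.
suff Hc : forall j, mulmv (msub A B) (ev j) = vzero.
  apply: functional_extensionality => i; apply: functional_extensionality => j.
  have := f_equal (fun v => v i) (Hc j); rewrite mulmv_ev /msub /vzero => E; lra.
move=> j; apply: n1_le_eq0 => e He.
have [da [Hda Ha]] := HA (e/2) ltac:(lra).
have [db [Hdb Hb]] := HB (e/2) ltac:(lra).
set t := Rmin da db / 2.
have Ht : 0 < t by rewrite /t; apply: Rdiv_lt_0_compat; [apply: Rmin_glb_lt|]; lra.
set y := vadd x (vscale t (ev j)).
have Hyx : vsub y x = vscale t (ev j) by apply: vext => i; rewrite /y /vsub /vadd; ring.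
have Hn : n1 (vsub y x) = t by rewrite Hyx n1_scale n1_ev Rabs_right; lra.
have Hlt1 : n1 (vsub y x) < da by rewrite Hn /t; have := Rmin_l da db; lra.
have Hlt2 : n1 (vsub y x) < db by rewrite Hn /t; have := Rmin_r da db; lra.
have := Ha y Hlt1; have := Hb y Hlt2. rewrite Hn Hyx => H2 H1.
have E : vscale t (mulmv (msub A B) (ev j)) =
  vsub (vsub (vsub (f y) (f x)) (mulmv B (vscale t (ev j))))
       (vsub (vsub (f y) (f x)) (mulmv A (vscale t (ev j)))).
  rewrite !mulmv_scale mulmv_msub; apply: vext => i; rewrite /vsub /vscale; ring.
have : n1 (vscale t (mulmv (msub A B) (ev j))) <= e * t.
  rewrite E; apply: Rle_trans (n1_sub _ _) _; lra.
rewrite n1_scale Rabs_right; last lra.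
move=> Hle. have : t * n1 (mulmv (msub A B) (ev j)) <= t * e by lra.
move/(Rmult_le_reg_l _ _ _ Ht). done.
Qed.

Lemma D1_comp (g : vec I -> vec J) (h : vec J -> vec K) A B x :
  D1 g A x -> D1 h B (g x) -> D1 (fun y => h (g y)) (mmul B A) x.
Proof.
move=> Hg Hh eps Heps.
have HmA := mnorm_ge0 A; have HmB := mnorm_ge0 B.
set c := mnorm A + 1.
have Hc : 0 < c by rewrite /c; lra.
set e1 := eps / (2 * c).
have He1 : 0 < e1 by rewrite /e1; apply: Rdiv_lt_0_compat; lra.
set e2 := Rmin 1 (eps / (2 * (mnorm B + 1))).
have He2 : 0 < e2 by rewrite /e2; apply: Rmin_glb_lt; [lra|apply: Rdiv_lt_0_compat; lra].
have [dh [Hdh Hh']] := Hh e1 He1.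
have [dg [Hdg Hg']] := Hg e2 He2.
exists (Rmin dg (dh / c)); split.
  apply: Rmin_glb_lt => //; apply: Rdiv_lt_0_compat; lra.
move=> y Hyx.
have Hyg : n1 (vsub y x) < dg by apply: Rlt_le_trans Hyx (Rmin_l _ _).
have Hyh : n1 (vsub y x) < dh / c by apply: Rlt_le_trans Hyx (Rmin_r _ _).
have Hn0 := n1_ge0 (vsub y x).
have G := Hg' y Hyg.
set Eg := vsub (vsub (g y) (g x)) (mulmv A (vsub y x)) in G.
have Hgyx : n1 (vsub (g y) (g x)) <= c * n1 (vsub y x).
  have -> : vsub (g y) (g x) = vadd Eg (mulmv A (vsub y x)).
    apply: vext => i; rewrite /Eg /vadd /vsub; ring.
  apply: Rle_trans (n1_add _ _) _.
  have := mulmv_bound A (vsub y x); have := Rmin_l 1 (eps / (2 * (mnorm B + 1))).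
  rewrite -/e2 /c => *; nra.
have Hgh : n1 (vsub (g y) (g x)) < dh.
  apply: Rle_lt_trans Hgyx _.
  have : c * n1 (vsub y x) < c * (dh / c) by apply: Rmult_lt_compat_l.
  replace (c * (dh / c)) with dh by (field; lra). done.
have Hq := Hh' (g y) Hgh.
have -> : vsub (vsub (h (g y)) (h (g x))) (mulmv (mmul B A) (vsub y x)) =
   vadd (vsub (vsub (h (g y)) (h (g x))) (mulmv B (vsub (g y) (g x)))) (mulmv B Eg).
  rewrite mulmv_mmul /Eg !mulmv_sub; apply: vext => i; rewrite /vadd /vsub; ring.
apply: Rle_trans (n1_add _ _) _.
have HB := mulmv_bound B Eg.
have HE2 : e2 * (mnorm B + 1) <= eps / 2.
  have := Rmin_r 1 (eps / (2 * (mnorm B + 1))); rewrite -/e2 => Hr.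
  have := Rmult_le_compat_r (mnorm B + 1) _ _ ltac:(lra) Hr.
  replace (eps / (2 * (mnorm B + 1)) * (mnorm B + 1)) with (eps / 2) by (field; lra). done.
have HE1 : e1 * c = eps / 2 by rewrite /e1; field; lra.
have : e1 * n1 (vsub (g y) (g x)) <= e1 * (c * n1 (vsub y x)) by apply: Rmult_le_compat_l; lra.
have : mnorm B * n1 Eg <= mnorm B * (e2 * n1 (vsub y x)) by apply: Rmult_le_compat_l.
have := n1_ge0 Eg.
nra.
Qed.

Lemma D1_lin_left (f : vec I -> vec J) (P : mat K J) A x :
  D1 f A x -> D1 (fun y => mulmv P (f y)) (mmul P A) x.
Proof.
move=> H eps Heps.
have Hm := mnorm_ge0 P.
have [d [Hd Hy]] := H (eps / (mnorm P + 1)) ltac:(apply: Rdiv_lt_0_compat; lra).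
exists d; split=> // y Hyx.
have := Hy y Hyx. set E := vsub (vsub _ _) _ => HE.
have -> : vsub (vsub (mulmv P (f y)) (mulmv P (f x))) (mulmv (mmul P A) (vsub y x)) = mulmv P E.
  by rewrite mulmv_mmul /E !mulmv_sub.
apply: Rle_trans (mulmv_bound _ _) _.
have := n1_ge0 E; have := n1_ge0 (vsub y x) => *.
apply: Rle_trans (_ : (mnorm P + 1) * n1 E <= _); first nra.
apply: Rle_trans (_ : (mnorm P + 1) * (eps / (mnorm P + 1) * n1 (vsub y x)) <= _).
  apply: Rmult_le_compat_l; lra.
right; field; lra.
Qed.

Lemma D1_sub_lin (f : vec I -> vec J) M A x :
  D1 f M x -> D1 (fun y => vsub (f y) (mulmv A y)) (msub M A) x.
Proof.
move=> H eps Heps; have [d [Hd Hy]] := H eps Heps; exists d; split=> // y Hyx.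
have -> : vsub (vsub (vsub (f y) (mulmv A y)) (vsub (f x) (mulmv A x))) (mulmv (msub M A) (vsub y x))
   = vsub (vsub (f y) (f x)) (mulmv M (vsub y x)).
  rewrite mulmv_msub !mulmv_sub; apply: vext => i; rewrite /vsub; ring.
exact: Hy.
Qed.

Lemma D1_lin (A : mat J I) x : D1 (fun y => mulmv A y) A x.
Proof.
move=> eps Heps; exists 1; split=> [|y _]; first lra.
rewrite -mulmv_sub.
have -> : vsub (mulmv A (vsub y x)) (mulmv A (vsub y x)) = vzero.
  apply: vext => i; rewrite /vsub /vzero; ring.
rewrite n1_zero; have := n1_ge0 (vsub y x); nra.
Qed.

Lemma D1_add (f g : vec I -> vec J) A B x :
  D1 f A x -> D1 g B x -> D1 (fun y => vadd (f y) (g y)) (madd A B) x.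
Proof.
move=> Hf Hg eps Heps.
have [d1 [Hd1 H1]] := Hf (eps/2) ltac:(lra).
have [d2 [Hd2 H2]] := Hg (eps/2) ltac:(lra).
exists (Rmin d1 d2); split; first exact: Rmin_glb_lt.
move=> y Hyx.
have := H1 y (Rlt_le_trans _ _ _ Hyx (Rmin_l _ _)).
have := H2 y (Rlt_le_trans _ _ _ Hyx (Rmin_r _ _)).
move=> B2 B1.
have -> : vsub (vsub (vadd (f y) (g y)) (vadd (f x) (g x))) (mulmv (madd A B) (vsub y x)) =
  vadd (vsub (vsub (f y) (f x)) (mulmv A (vsub y x))) (vsub (vsub (g y) (g x)) (mulmv B (vsub y x))).
  rewrite mulmv_madd; apply: vext => i; rewrite /vadd /vsub; ring.
apply: Rle_trans (n1_add _ _) _; lra.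
Qed.

End Basic.

Lemma contm_rows (I J K : finType) (M : vec I -> mat J K) x :
  (forall j, contv (fun y k => M y j k) x) -> contm M x.
Proof.
move=> H eps Heps.
have KJ := KI_pos J.
set e := eps / KI J.
have He : 0 < e by apply: Rdiv_lt_0_compat.
pose P := fun j d => forall y, n1 (vsub y x) < d ->
   n1 (vsub (fun k => M y j k) (fun k => M x j k)) < e.
have Hm : forall j d d', 0 < d' <= d -> P j d -> P j d'.
  move=> j d0 d' Hdd P0 y Hy; apply: P0; lra.
have [d [Hd Hk]] := fin_delta Hm (fun j => H j e He).
exists d; split=> // y Hyx.
rewrite /mnorm.
apply: (Rle_lt_trans _ (\big[Rplus/0]_(j : J) e)).
  apply: sum_le => j; have := Hk j y Hyx; rewrite /n1 /vsub /msub => *; lra.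
rewrite sum_const /e /KI.
have := pos_INR #|J| => Hp.
replace (INR #|J| * (eps / (INR #|J| + 1))) with (eps * (INR #|J| / (INR #|J| + 1))) by (field; lra).
have : INR #|J| / (INR #|J| + 1) < 1.
  apply: (Rmult_lt_reg_r (INR #|J| + 1)); first lra.
  replace (INR #|J| / (INR #|J| + 1) * (INR #|J| + 1)) with (INR #|J|) by (field; lra). lra.
nra.
Qed.

Definition lpt {I : finType} (b a : vec I) (s : R) : vec I := vadd b (vscale s a).

Lemma line_deriv (I J : finType) (f : vec I -> vec J) M b a s j :
  D1 f M (lpt b a s) ->
  derivable_pt_lim (fun s => f (lpt b a s) j) s (mulmv M a j).
Proof.
move=> H eps Heps.
have Ha := n1_ge0 a.
have [d [Hd Hy]] := H (eps / (2 * (n1 a + 1))) ltac:(apply: Rdiv_lt_0_compat; lra).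
have Hd' : 0 < d / (n1 a + 1) by apply: Rdiv_lt_0_compat; lra.
exists (mkposreal _ Hd') => h Hh0 /= Hh.
have Hyz : vsub (lpt b a (s + h)) (lpt b a s) = vscale h a.
  apply: vext => i; rewrite /lpt /vsub /vadd /vscale; ring.
have Hn : n1 (vsub (lpt b a (s + h)) (lpt b a s)) < d.
  rewrite Hyz n1_scale.
  have Hh1 : Rabs h * (n1 a + 1) < d.
    have := Rmult_lt_compat_r (n1 a + 1) _ _ ltac:(lra) Hh.
    replace (d / (n1 a + 1) * (n1 a + 1)) with d by (field; lra). done.
  have := Rabs_pos h; nra.
have := Hy _ Hn; rewrite Hyz n1_scale.
set E := vsub (vsub _ _) _ => HE.
have HEj := n1_coord E j.
have Ej : E j = f (lpt b a (s + h)) j - f (lpt b a s) j - h * mulmv M a j.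
  rewrite /E mulmv_scale /vsub /vscale //.
replace ((f (lpt b a (s + h)) j - f (lpt b a s) j) / h - mulmv M a j) with (E j / h)
  by (rewrite Ej; field; exact: Hh0).
rewrite /Rdiv Rabs_mult Rabs_inv.
have Hhp : 0 < Rabs h by apply: Rabs_pos_lt.
have : Rabs (E j) <= eps / (2 * (n1 a + 1)) * (Rabs h * n1 a) by lra.
move=> HE2.
apply: (Rmult_lt_reg_r (Rabs h)) => //.
rewrite Rmult_assoc Rinv_l; last lra.
apply: Rle_lt_trans (_ : eps / (2 * (n1 a + 1)) * (Rabs h * n1 a) < _); first lra.
have : n1 a / (2 * (n1 a + 1)) < 1.
  apply: (Rmult_lt_reg_r (2 * (n1 a + 1))); first lra.
  replace (n1 a / (2 * (n1 a + 1)) * (2 * (n1 a + 1))) with (n1 a) by (field; lra). lra.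
move=> Hlt.
replace (eps / (2 * (n1 a + 1)) * (Rabs h * n1 a)) with (eps * Rabs h * (n1 a / (2 * (n1 a + 1))))
  by (field; lra).
have : 0 < eps * Rabs h by nra.
nra.
Qed.

Lemma mvi (I J : finType) (f : vec I -> vec J) (M : vec I -> mat J I) A x0 r eps :
  (forall z, n1 (vsub z x0) < r -> D1 f (M z) z /\ mnorm (msub (M z) A) <= eps) ->
  forall a b, n1 (vsub a x0) < r -> n1 (vsub b x0) < r ->
  n1 (vsub (vsub (f a) (f b)) (mulmv A (vsub a b))) <= INR #|J| * eps * n1 (vsub a b).
Proof.
move=> H a b Ha Hb.
apply: (Rle_trans _ (\big[Rplus/0]_(j : J) (eps * n1 (vsub a b)))); last by rewrite sum_const; right; ring.
set c := eps * n1 (vsub a b).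
rewrite {1}/n1.
apply: sum_le => j.
pose g := fun y => vsub (f y) (mulmv A y).
have Hseg : forall s, 0 <= s <= 1 -> n1 (vsub (lpt b (vsub a b) s) x0) < r.
  move=> s Hs.
  have -> : vsub (lpt b (vsub a b) s) x0 = vadd (vscale (1 - s) (vsub b x0)) (vscale s (vsub a x0)).
    apply: vext => i; rewrite /lpt /vsub /vadd /vscale; ring.
  apply: Rle_lt_trans (n1_add _ _) _; rewrite !n1_scale !Rabs_right; try lra.
  have := n1_ge0 (vsub a x0); have := n1_ge0 (vsub b x0) => *.
  have h1 : (1 - s) * n1 (vsub b x0) <= (1 - s) * r by apply: Rmult_le_compat_l; lra.
  have h2 : s * n1 (vsub a x0) <= s * r by apply: Rmult_le_compat_l; lra.
  case: (Req_dec s 0) => [->|Hs0].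
  + lra.
  + have : s * n1 (vsub a x0) < s * r by apply: Rmult_lt_compat_l; lra.
    lra.
have Hder : forall s, 0 <= s <= 1 ->
    derivable_pt_lim (fun s => g (lpt b (vsub a b) s) j) s
      (mulmv (msub (M (lpt b (vsub a b) s)) A) (vsub a b) j).
  move=> s Hs; apply: line_deriv; apply: D1_sub_lin; exact: (proj1 (H _ (Hseg s Hs))).
have [cc [Hcc Hcr]] := MVT_cor2 _ _ 0 1 Rlt_0_1 Hder.
have E1 : lpt b (vsub a b) 1 = a by apply: vext => i; rewrite /lpt /vadd /vscale /vsub; ring.
have E0 : lpt b (vsub a b) 0 = b by apply: vext => i; rewrite /lpt /vadd /vscale /vsub; ring.
rewrite E1 E0 in Hcc.
have -> : vsub (vsub (f a) (f b)) (mulmv A (vsub a b)) j = g a j - g b j.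
  rewrite /g mulmv_sub /vsub; ring.
rewrite Hcc Rminus_0_r Rmult_1_r.
apply: Rle_trans (n1_coord _ j) _.
apply: Rle_trans (mulmv_bound _ _) _.
rewrite /c; apply: Rmult_le_compat_r; first exact: n1_ge0.
apply: (proj2 (H _ (Hseg cc ltac:(lra)))).
Qed.

Section Schwarz.
Variable I : finType.
Variables (f : vec I -> R) (G : vec I -> vec I) (H : mat I I) (x : vec I).
Hypothesis HG : forall y, D1 (fun z (_ : unit) => f z) (fun _ j => G y j) y.
Hypothesis HH : D1 G H x.

Definition sdelta (u v : vec I) (t : R) :=
  f (vadd x (vadd (vscale t u) (vscale t v))) - f (vadd x (vscale t u))
  - f (vadd x (vscale t v)) + f x.

Lemma sdelta_sym u v t : sdelta u v t = sdelta v u t.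
Proof.
rewrite /sdelta.
have -> : vadd x (vadd (vscale t u) (vscale t v)) = vadd x (vadd (vscale t v) (vscale t u)).
  apply: vext => i; rewrite /vadd; ring.
ring.
Qed.

Lemma grad_line z u s : derivable_pt_lim (fun s => f (lpt z u s)) s (dot (G (lpt z u s)) u).
Proof.
have := @line_deriv _ _ _ _ z u s tt (HG (lpt z u s)).
have -> : mulmv (fun (_ : unit) j => G (lpt z u s) j) u tt = dot (G (lpt z u s)) u by [].
done.
Qed.

Lemma schwarz_half u v eps : 0 < eps -> exists delta, 0 < delta /\
  forall t, 0 < t < delta -> Rabs (sdelta u v t - t * t * dot (mulmv H v) u) <= eps * (t * t).
Proof.
move=> Heps.
have Hu := n1_ge0 u; have Hv := n1_ge0 v.
set C := (2 * n1 u + n1 v) * n1 u + 1.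
have HC0 : 0 <= (2 * n1 u + n1 v) * n1 u by apply: Rmult_le_pos; lra.
have HC : 0 < C by rewrite /C; lra.
have [d [Hd Hr]] := @HH (eps / C) ltac:(apply: Rdiv_lt_0_compat; lra).
set S := n1 u + n1 v + 1.
have HS : 0 < S by rewrite /S; lra.
exists (d / S); split; first by apply: Rdiv_lt_0_compat.
move=> t Ht.
have Htd : t * S < d.
  have := Rmult_lt_compat_r S _ _ HS (proj2 Ht).
  replace (d / S * S) with d by (field; lra). done.
pose phi := fun s => f (lpt (vadd x (vscale t v)) u s) - f (lpt x u s).
have Hder : forall s, 0 <= s <= t -> derivable_pt_lim phi s
   (dot (G (lpt (vadd x (vscale t v)) u s)) u - dot (G (lpt x u s)) u).
  move=> s _; apply: derivable_pt_lim_minus; exact: grad_line.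
have [c [Hc Hcr]] := MVT_cor2 _ _ 0 t (proj1 Ht) Hder.
have E : sdelta u v t = phi t - phi 0.
  rewrite /sdelta /phi /lpt.
  have -> : vadd (vadd x (vscale t v)) (vscale t u) = vadd x (vadd (vscale t u) (vscale t v)).
    apply: vext => i; rewrite /vadd; ring.
  have -> : vadd (vadd x (vscale t v)) (vscale 0 u) = vadd x (vscale t v).
    apply: vext => i; rewrite /vadd /vscale; ring.
  have -> : vadd x (vscale 0 u) = x by apply: vext => i; rewrite /vadd /vscale; ring.
  ring.
rewrite E Hc Rminus_0_r.
set p1 := lpt (vadd x (vscale t v)) u c.
set p2 := lpt x u c.
pose r := fun p => vsub (vsub (G p) (G x)) (mulmv H (vsub p x)).
have Gdec : forall p, dot (G p) u = dot (G x) u + dot (mulmv H (vsub p x)) u + dot (r p) u.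
  move=> p; rewrite -dot_addl -dot_addl; congr dot; apply: vext => i; rewrite /r /vadd /vsub; ring.
have Hp1 : vsub p1 x = vadd (vscale c u) (vscale t v).
  apply: vext => i; rewrite /p1 /lpt /vadd /vsub /vscale; ring.
have Hp2 : vsub p2 x = vscale c u.
  apply: vext => i; rewrite /p2 /lpt /vadd /vsub /vscale; ring.
have Hn2 : n1 (vsub p2 x) <= t * n1 u.
  rewrite Hp2 n1_scale Rabs_right; last lra.
  apply: Rmult_le_compat_r => //; lra.
have Hn1 : n1 (vsub p1 x) <= t * (n1 u + n1 v).
  rewrite Hp1; apply: Rle_trans (n1_add _ _) _; rewrite !n1_scale !Rabs_right; try lra.
  have : c * n1 u <= t * n1 u by apply: Rmult_le_compat_r => //; lra.
  lra.
have Hlt1 : n1 (vsub p1 x) < d.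
  apply: Rle_lt_trans Hn1 _; apply: Rle_lt_trans Htd; rewrite /S.
  apply: Rmult_le_compat_l; lra.
have Hlt2 : n1 (vsub p2 x) < d.
  apply: Rle_lt_trans Hn2 _; apply: Rle_lt_trans Htd; rewrite /S.
  apply: Rmult_le_compat_l; lra.
have R1 := Hr p1 Hlt1. have R2 := Hr p2 Hlt2.
rewrite -/(r p1) in R1; rewrite -/(r p2) in R2.
rewrite (Gdec p1) (Gdec p2).
have HL : dot (mulmv H (vsub p1 x)) u - dot (mulmv H (vsub p2 x)) u = t * dot (mulmv H v) u.
  rewrite -dot_subl -mulmv_sub.
  have -> : vsub (vsub p1 x) (vsub p2 x) = vscale t v.
    rewrite Hp1 Hp2; apply: vext => i; rewrite /vsub /vadd /vscale; ring.
  by rewrite mulmv_scale dot_scalel.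
have Hr0 := n1_ge0 (r p1). have Hr0' := n1_ge0 (r p2).
set a1 := dot (r p1) u. set a2 := dot (r p2) u.
have Hb1 : Rabs a1 <= n1 (r p1) * n1 u := dot_bound (r p1) u.
have Hb2 : Rabs a2 <= n1 (r p2) * n1 u := dot_bound (r p2) u.
replace ((dot (G x) u + dot (mulmv H (vsub p1 x)) u + a1 - (dot (G x) u + dot (mulmv H (vsub p2 x)) u + a2)) * t - t * t * dot (mulmv H v) u)
  with (t * (a1 - a2)) by (rewrite [t * t * _]Rmult_assoc -HL; ring).
rewrite Rabs_mult Rabs_right; last lra.
have Ha : Rabs (a1 - a2) <= eps / C * (t * (2 * n1 u + n1 v)) * n1 u.
  apply: Rle_trans (Rabs_triang_gen _ _) _ || (unfold Rminus; apply: Rle_trans (Rabs_triang _ _) _; rewrite Rabs_Ropp).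
  have e1 : n1 (r p1) <= eps / C * (t * (n1 u + n1 v)).
    apply: Rle_trans R1 _; apply: Rmult_le_compat_l => //; apply: Rlt_le; apply: Rdiv_lt_0_compat; lra.
  have e2 : n1 (r p2) <= eps / C * (t * n1 u).
    apply: Rle_trans R2 _; apply: Rmult_le_compat_l => //; apply: Rlt_le; apply: Rdiv_lt_0_compat; lra.
  have : n1 (r p1) * n1 u <= eps / C * (t * (n1 u + n1 v)) * n1 u by apply: Rmult_le_compat_r.
  have : n1 (r p2) * n1 u <= eps / C * (t * n1 u) * n1 u by apply: Rmult_le_compat_r.
  have : eps / C * (t * (n1 u + n1 v)) * n1 u + eps / C * (t * n1 u) * n1 u =
    eps / C * (t * (2 * n1 u + n1 v)) * n1 u by ring.
  lra.
have HCb : eps / C * (t * (2 * n1 u + n1 v)) * n1 u <= eps * t.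
  replace (eps / C * (t * (2 * n1 u + n1 v)) * n1 u) with (eps * t * (((2 * n1 u + n1 v) * n1 u) / C)) by (field; lra).
  have : ((2 * n1 u + n1 v) * n1 u) / C <= 1.
    apply: (Rmult_le_reg_r C) => //.
    replace ((2 * n1 u + n1 v) * n1 u / C * C) with ((2 * n1 u + n1 v) * n1 u) by (field; lra).
    rewrite /C; lra.
  have : 0 < eps * t by apply: Rmult_lt_0_compat; lra.
  move=> Het Hle1.
  rewrite -[X in _ <= X]Rmult_1_r; apply: Rmult_le_compat_l; lra.
have : t * Rabs (a1 - a2) <= t * (eps * t) by apply: Rmult_le_compat_l; lra.
lra.
Qed.

Lemma schwarz_dot u v : dot (mulmv H v) u = dot (mulmv H u) v.
Proof.
set a := dot (mulmv H v) u; set b := dot (mulmv H u) v.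
suff : forall e, 0 < e -> Rabs (a - b) <= e.
  move=> Hb; case: (Req_dec a b) => // Hne.
  have Hp : 0 < Rabs (a - b) by apply: Rabs_pos_lt; lra.
  have := Hb (Rabs (a - b) / 2) ltac:(lra); lra.
move=> e He.
have [d1 [Hd1 H1]] := @schwarz_half u v (e/2) ltac:(lra).
have [d2 [Hd2 H2]] := @schwarz_half v u (e/2) ltac:(lra).
set t := Rmin d1 d2 / 2.
have Ht : 0 < t by rewrite /t; apply: Rdiv_lt_0_compat; [apply: Rmin_glb_lt|]; lra.
have Ht1 : t < d1 by rewrite /t; have := Rmin_l d1 d2; lra.
have Ht2 : t < d2 by rewrite /t; have := Rmin_r d1 d2; lra.
have A1 := H1 t (conj Ht Ht1). have A2 := H2 t (conj Ht Ht2).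
rewrite sdelta_sym in A2. rewrite -/a in A1; rewrite -/b in A2.
have Htt : 0 < t * t by apply: Rmult_lt_0_compat.
have : Rabs (t * t * (a - b)) <= e * (t * t).
  replace (t * t * (a - b)) with ((sdelta u v t - t * t * b) + - (sdelta u v t - t * t * a)) by ring.
  apply: Rle_trans (Rabs_triang _ _) _; rewrite Rabs_Ropp.
  have : e / 2 * (t * t) + e / 2 * (t * t) = e * (t * t) by field.
  lra.
rewrite Rabs_mult Rabs_right; last lra.
move=> Hle; apply: (Rmult_le_reg_l (t * t)) => //; lra.
Qed.

Lemma schwarz i j : H i j = H j i.
Proof.
have := schwarz_dot (ev i) (ev j).
rewrite !dot_ev !mulmv_ev //.
Qed.

End Schwarz.

Lemma half_pos k : 0 < (/ 2) ^ k.
Proof. apply: pow_lt; lra. Qed.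

Lemma half_S k : (/ 2) ^ k.+1 = (/ 2) ^ k / 2.
Proof. rewrite /= /Rdiv; ring. Qed.

Lemma half_small eps : 0 < eps -> exists N, forall k, (N <= k)%nat -> (/ 2) ^ k < eps.
Proof.
move=> He; have [N HN] := pow_lt_1_zero (/ 2) ltac:(rewrite Rabs_right; lra) eps He.
exists N => k /leP Hk; have := HN k Hk; rewrite Rabs_right //; apply: Rle_ge; apply: Rlt_le; exact: half_pos.
Qed.

Lemma half_le k m : (k <= m)%nat -> (/ 2) ^ m <= (/ 2) ^ k.
Proof.
move=> /leP; elim=> [|m' _ IH]; first lra.
rewrite half_S; have := half_pos m'; lra.
Qed.

Section LG.
Variables (I J : finType) (F : vec I -> vec J) (A : mat J I) (R0 : mat I J) (x0 : vec I) (r c : R).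
Hypothesis HR0 : forall y, mulmv A (mulmv R0 y) = y.
Hypothesis Hc : 0 < c.
Hypothesis HcR : forall y, n1 (mulmv R0 y) <= c * n1 y.
Hypothesis Hr : 0 < r.
Hypothesis Hdev : forall a b, n1 (vsub a x0) < r -> n1 (vsub b x0) < r ->
  n1 (vsub (vsub (F a) (F b)) (mulmv A (vsub a b))) <= n1 (vsub a b) / (2 * c).

Lemma LG_lip a b : n1 (vsub a x0) < r -> n1 (vsub b x0) < r ->
  n1 (vsub (F a) (F b)) <= (mnorm A + / (2 * c)) * n1 (vsub a b).
Proof.
move=> Ha Hb.
have -> : vsub (F a) (F b) = vadd (vsub (vsub (F a) (F b)) (mulmv A (vsub a b))) (mulmv A (vsub a b)).
  apply: vext => i; rewrite /vadd /vsub; ring.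
apply: Rle_trans (n1_add _ _) _.
have := Hdev Ha Hb; have := mulmv_bound A (vsub a b).
rewrite /Rdiv => *; lra.
Qed.

End LG.

Section LG2.
Variables (I J : finType) (F : vec I -> vec J) (A : mat J I) (R0 : mat I J) (x0 : vec I) (r c : R).
Hypothesis HR0 : forall y, mulmv A (mulmv R0 y) = y.
Hypothesis Hc : 0 < c.
Hypothesis HcR : forall y, n1 (mulmv R0 y) <= c * n1 y.
Hypothesis Hr : 0 < r.
Hypothesis Hdev : forall a b, n1 (vsub a x0) < r -> n1 (vsub b x0) < r ->
  n1 (vsub (vsub (F a) (F b)) (mulmv A (vsub a b))) <= n1 (vsub a b) / (2 * c).

Variables (x : vec I) (y : vec J).
Hypothesis Hx : n1 (vsub x x0) < r / 2.
Hypothesis Hy : 2 * c * n1 (vsub (F x) y) < r / 2.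

Local Notation e := (n1 (vsub (F x) y)).

Fixpoint sq (k : nat) : vec I :=
  match k with 0 => x | k'.+1 => vsub (sq k') (mulmv R0 (vsub (F (sq k')) y)) end.

Lemma sq_inv k : n1 (vsub (F (sq k)) y) <= e * (/ 2) ^ k /\
  n1 (vsub (sq k) x) <= 2 * c * e * (1 - (/ 2) ^ k).
Proof.
have He := n1_ge0 (vsub (F x) y).
elim: k => [|k [IH1 IH2]].
  rewrite /= Rmult_1_r; split; first lra.
  have -> : vsub x x = vzero by apply: vext => i; rewrite /vsub /vzero; ring.
  rewrite n1_zero; lra.
have Hh := half_pos k.
have Hstep : n1 (vsub (sq k.+1) (sq k)) <= c * (e * (/ 2) ^ k).
  have -> : vsub (sq k.+1) (sq k) = vopp (mulmv R0 (vsub (F (sq k)) y)).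
    apply: vext => i; rewrite /= /vsub /vopp; ring.
  rewrite n1_opp; apply: Rle_trans (HcR _) _; apply: Rmult_le_compat_l; lra.
have H2 : n1 (vsub (sq k.+1) x) <= 2 * c * e * (1 - (/ 2) ^ k.+1).
  apply: Rle_trans (n1_tri _ (sq k) _) _. rewrite half_S.
  have : 2 * c * e * (1 - (/ 2) ^ k) + c * (e * (/ 2) ^ k) = 2 * c * e * (1 - (/ 2) ^ k / 2) by field.
  lra.
have Hball : forall j, n1 (vsub (sq j) x) <= 2 * c * e * (1 - (/ 2) ^ j) -> n1 (vsub (sq j) x0) < r.
  move=> j Hj; apply: Rle_lt_trans (n1_tri _ x _) _.
  have := half_pos j => Hj'.
  have : 2 * c * e * (1 - (/ 2) ^ j) <= 2 * c * e.
    have : 0 <= 2 * c * e by apply: Rmult_le_pos; lra.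
    move=> H0; have : 2 * c * e * (/ 2) ^ j >= 0 by apply: Rle_ge; apply: Rmult_le_pos; lra.
    lra.
  lra.
split=> //.
have -> : vsub (F (sq k.+1)) y = vsub (vsub (F (sq k.+1)) (F (sq k))) (mulmv A (vsub (sq k.+1) (sq k))).
  have -> : vsub (sq k.+1) (sq k) = vopp (mulmv R0 (vsub (F (sq k)) y)).
    apply: vext => i; rewrite /= /vsub /vopp; ring.
  rewrite mulmv_opp HR0; apply: vext => i; rewrite /vsub /vopp; ring.
apply: Rle_trans (Hdev (Hball _ H2) (Hball _ IH2)) _.
rewrite half_S.
apply: (Rmult_le_reg_l (2 * c)); first lra.
replace (2 * c * (n1 (vsub (sq k.+1) (sq k)) / (2 * c))) with (n1 (vsub (sq k.+1) (sq k))) by (field; lra).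
replace (2 * c * (e * ((/ 2) ^ k / 2))) with (c * (e * (/ 2) ^ k)) by field.
exact: Hstep.
Qed.

Lemma sq_ball k : n1 (vsub (sq k) x0) < r.
Proof.
have He := n1_ge0 (vsub (F x) y).
have [_ Hj] := sq_inv k.
apply: Rle_lt_trans (n1_tri _ x _) _.
have := half_pos k => Hj'.
have : 2 * c * e * (1 - (/ 2) ^ k) <= 2 * c * e.
  have : 0 <= 2 * c * e by apply: Rmult_le_pos; lra.
  move=> H0; have : 2 * c * e * (/ 2) ^ k >= 0 by apply: Rle_ge; apply: Rmult_le_pos; lra.
  lra.
lra.
Qed.

Lemma sq_cauchy k j : n1 (vsub (sq (k + j)) (sq k)) <= 2 * c * e * ((/ 2) ^ k - (/ 2) ^ (k + j)).
Proof.
have He := n1_ge0 (vsub (F x) y).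
elim: j => [|j IH].
  rewrite addn0; have -> : vsub (sq k) (sq k) = vzero by apply: vext => i; rewrite /vsub /vzero; ring.
  rewrite n1_zero; lra.
rewrite addnS.
have [H1 _] := sq_inv (k + j).
have Hstep : n1 (vsub (sq (k + j).+1) (sq (k + j))) <= c * (e * (/ 2) ^ (k + j)).
  have -> : vsub (sq (k + j).+1) (sq (k + j)) = vopp (mulmv R0 (vsub (F (sq (k + j))) y)).
    apply: vext => i; rewrite /= /vsub /vopp; ring.
  rewrite n1_opp; apply: Rle_trans (HcR _) _; apply: Rmult_le_compat_l; lra.
apply: Rle_trans (n1_tri _ (sq (k + j)) _) _. rewrite half_S.
have : 2 * c * e * ((/ 2) ^ k - (/ 2) ^ (k + j)) + c * (e * (/ 2) ^ (k + j)) =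
  2 * c * e * ((/ 2) ^ k - (/ 2) ^ (k + j) / 2) by field.
lra.
Qed.

Lemma sq_cauchy' k m : (k <= m)%nat -> n1 (vsub (sq m) (sq k)) <= 2 * c * e * (/ 2) ^ k.
Proof.
move=> Hkm; have -> : m = (k + (m - k))%nat by rewrite subnKC.
apply: Rle_trans (sq_cauchy _ _) _.
have := half_pos (k + (m - k)); have : 0 <= 2 * c * e by apply: Rmult_le_pos; [lra|exact: n1_ge0].
move=> H0 H1. rewrite Rmult_minus_distr_l.
have : 0 <= 2 * c * e * (/ 2) ^ (k + (m - k)) by apply: Rmult_le_pos; lra.
lra.
Qed.

Lemma sq_coord_cauchy i : Cauchy_crit (fun k => sq k i).
Proof.
move=> eps Heps.
have He := n1_ge0 (vsub (F x) y).
have H0 : 0 <= 2 * c * e by apply: Rmult_le_pos; lra.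
have Hp : 0 < eps / (2 * c * e + 1) by apply: Rdiv_lt_0_compat; lra.
have [N HN] := @half_small (eps / (2 * c * e + 1)) Hp.
exists N => n m /leP Hn /leP Hm.
rewrite /Rdist.
have Hb : forall k m, (N <= k)%nat -> (k <= m)%nat -> Rabs (sq m i - sq k i) < eps.
  move=> k m' Hk Hkm.
  apply: Rle_lt_trans (n1_coord (vsub (sq m') (sq k)) i) _.
  apply: Rle_lt_trans (sq_cauchy' Hkm) _.
  have := HN k Hk => Hh.
  have := half_pos k => Hh0.
  apply: Rle_lt_trans (_ : 2 * c * e * (/ 2) ^ k <= (2 * c * e + 1) * (/ 2) ^ k) _.
    apply: Rmult_le_compat_r; lra.
  have := Rmult_lt_compat_l (2 * c * e + 1) _ _ ltac:(lra) Hh.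
  replace ((2 * c * e + 1) * (eps / (2 * c * e + 1))) with eps by (field; lra). done.
case: (leqP n m) => Hnm.
- rewrite Rabs_minus_sym; exact: Hb Hn Hnm.
- exact: Hb Hm (ltnW Hnm).
Qed.

Definition lim_sq : vec I := fun i => proj1_sig (R_complete _ (sq_coord_cauchy i)).

Lemma lim_sq_cv eps : 0 < eps -> exists N, forall k, (N <= k)%nat -> n1 (vsub (sq k) lim_sq) <= eps.
Proof.
move=> Heps.
have KIp := KI_pos I.
set e' := eps / KI I.
have He' : 0 < e' by apply: Rdiv_lt_0_compat.
pose P := fun i N => forall k, (N <= k)%nat -> Rabs (sq k i - lim_sq i) < e'.
have Hm : forall i N0 N', (N0 <= N')%nat -> P i N0 -> P i N'.
  move=> i N0 N' HN0 P0 k Hk; apply: P0; exact: leq_trans HN0 Hk.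
have Hex : forall i, exists N, P i N.
  move=> i.
  have := proj2_sig (R_complete _ (sq_coord_cauchy i)) e' He'.
  move=> [N0 HN0]; exists N0 => k /leP Hk; exact: HN0.
have [N HN] := fin_N Hm Hex.
exists N => k Hk; rewrite /n1.
apply: (Rle_trans _ (\big[Rplus/0]_(i : I) e')).
  apply: sum_le => i; apply: Rlt_le; exact: HN.
rewrite sum_const /e' /KI.
have := pos_INR #|I| => Hp.
replace (INR #|I| * (eps / (INR #|I| + 1))) with (eps * (INR #|I| / (INR #|I| + 1))) by (field; lra).
have : INR #|I| / (INR #|I| + 1) <= 1.
  apply: (Rmult_le_reg_r (INR #|I| + 1)); first lra.
  replace (INR #|I| / (INR #|I| + 1) * (INR #|I| + 1)) with (INR #|I|) by (field; lra). lra.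
move=> H1; rewrite -[X in _ <= X]Rmult_1_r; apply: Rmult_le_compat_l; lra.
Qed.

Lemma LG_main : exists x', F x' = y /\ n1 (vsub x' x) <= 2 * c * e.
Proof.
have He := n1_ge0 (vsub (F x) y).
have H0 : 0 <= 2 * c * e by apply: Rmult_le_pos; lra.
have Hd : n1 (vsub lim_sq x) <= 2 * c * e.
  suff : forall eps, 0 < eps -> n1 (vsub lim_sq x) <= 2 * c * e + eps.
    move=> Hs; case: (Rle_lt_dec (n1 (vsub lim_sq x)) (2 * c * e)) => // Hlt.
    have := Hs ((n1 (vsub lim_sq x) - 2 * c * e) / 2) ltac:(lra); lra.
  move=> eps Heps; have [N HN] := lim_sq_cv Heps.
  have := HN N (leqnn N).
  have [_ H2] := sq_inv N.
  have := half_pos N => Hh.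
  move=> H3; apply: Rle_trans (n1_tri _ (sq N) _) _.
  rewrite n1_subC in H3.
  have : 2 * c * e * (1 - (/ 2) ^ N) <= 2 * c * e.
    have : 2 * c * e * (/ 2) ^ N >= 0 by apply: Rle_ge; apply: Rmult_le_pos; lra.
    lra.
  lra.
exists lim_sq; split=> //.
have Hball : n1 (vsub lim_sq x0) < r.
  apply: Rle_lt_trans (n1_tri _ x _) _; lra.
suff : vsub (F lim_sq) y = vzero.
  move=> E; apply: vext => i; have := f_equal (fun v => v i) E; rewrite /vsub /vzero; lra.
apply: n1_le_eq0 => eps Heps.
set L := mnorm A + / (2 * c) + 1.
have HL : 0 < L.
  have := mnorm_ge0 A; have : 0 < / (2 * c) by apply: Rinv_0_lt_compat; lra.
  rewrite /L; lra.
have [N1 HN1] := @lim_sq_cv (eps / (2 * L)) ltac:(apply: Rdiv_lt_0_compat; lra).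
have [N2 HN2] := @half_small (eps / (2 * (e + 1))) ltac:(apply: Rdiv_lt_0_compat; lra).
set k := maxn N1 N2.
have := HN1 k (leq_maxl _ _); have := HN2 k (leq_maxr _ _) => Hh Hs.
have [Hf _] := sq_inv k.
apply: Rle_trans (n1_tri _ (F (sq k)) _) _.
have := LG_lip Hdev Hball (sq_ball k). rewrite n1_subC in Hs.
move=> Hlip.
have Hk0 := half_pos k.
have A1 : (mnorm A + / (2 * c)) * n1 (vsub lim_sq (sq k)) <= eps / 2.
  apply: Rle_trans (_ : L * n1 (vsub lim_sq (sq k)) <= _).
    apply: Rmult_le_compat_r; [exact: n1_ge0| rewrite /L; lra].
  apply: Rle_trans (Rmult_le_compat_l _ _ _ (Rlt_le _ _ HL) Hs) _.
  right; field; lra.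
have A2 : e * (/ 2) ^ k <= eps / 2.
  apply: Rle_trans (_ : (e + 1) * (/ 2) ^ k <= _); first by apply: Rmult_le_compat_r; lra.
  apply: Rle_trans (Rmult_le_compat_l _ _ _ _ (Rlt_le _ _ Hh)) _; first lra.
  right; field; lra.
lra.
Qed.

End LG2.

Lemma lin_rinv (I J : finType) (A M : mat J I) (R0 : mat I J) c :
  (forall y, mulmv A (mulmv R0 y) = y) -> 0 < c -> (forall y, n1 (mulmv R0 y) <= c * n1 y) ->
  mnorm (msub M A) <= / (2 * c) ->
  exists R : mat I J, forall y, mulmv M (mulmv R y) = y.
Proof.
move=> HR0 Hc HcR HM; apply: (@rinv_exists I J M) => y.
have Hy := n1_ge0 y.
set r := 4 * c * n1 y + 4.
have Hcy : 0 <= c * n1 y by apply: Rmult_le_pos; lra.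
have Hr : 0 < r by rewrite /r; lra.
have Hdev : forall a b, n1 (vsub a vzero) < r -> n1 (vsub b vzero) < r ->
  n1 (vsub (vsub (mulmv M a) (mulmv M b)) (mulmv A (vsub a b))) <= n1 (vsub a b) / (2 * c).
  move=> a b _ _.
  have -> : vsub (vsub (mulmv M a) (mulmv M b)) (mulmv A (vsub a b)) = mulmv (msub M A) (vsub a b).
    rewrite mulmv_msub !mulmv_sub; apply: vext => i; rewrite /vsub; ring.
  apply: Rle_trans (mulmv_bound _ _) _.
  rewrite /Rdiv Rmult_comm; apply: Rmult_le_compat_l => //; exact: n1_ge0.
have Hx : n1 (vsub (@vzero I) vzero) < r / 2.
  have -> : vsub (@vzero I) vzero = vzero by apply: vext => i; rewrite /vsub /vzero; ring.
  rewrite n1_zero; lra.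
have Hyy : 2 * c * n1 (vsub (mulmv M vzero) y) < r / 2.
  rewrite mulmv_zero.
  have -> : vsub vzero y = vopp y by apply: vext => i; rewrite /vsub /vzero /vopp; ring.
  rewrite n1_opp /r; lra.
have [x' [Hx' _]] := LG_main (F := fun v => mulmv M v) HR0 Hc HcR Hdev Hx Hyy.
by exists x'.
Qed.

Definition evn (P : nat -> Prop) := exists K, forall k, (K <= k)%nat -> P k.

Lemma evn_and P Q : evn P -> evn Q -> evn (fun k => P k /\ Q k).
Proof.
move=> [K1 H1] [K2 H2]; exists (maxn K1 K2) => k Hk; split.
- apply: H1; exact: leq_trans (leq_maxl _ _) Hk.
- apply: H2; exact: leq_trans (leq_maxr _ _) Hk.
Qed.

Lemma evn_mono (P Q : nat -> Prop) : evn P -> (forall k, P k -> Q k) -> evn Q.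
Proof. move=> [K HK] H; exists K => k Hk; exact: H (HK k Hk). Qed.

Lemma evn_imp (P Q : nat -> Prop) : evn P -> evn (fun k => P k -> Q k) -> evn Q.
Proof. move=> H1 H2; apply: (evn_mono (evn_and H1 H2)) => k [a b]; exact: b. Qed.

Lemma evn_true (P : nat -> Prop) : (forall k, P k) -> evn P.
Proof. move=> H; exists 0%nat => k _; exact: H. Qed.

Lemma tsmall (t : nat -> R) : Un_cv t 0 -> forall eps, 0 < eps -> evn (fun k => Rabs (t k) < eps).
Proof.
move=> H eps He; have [N HN] := H eps He; exists N => k /leP Hk.
have := HN k Hk; rewrite /Rdist Rminus_0_r //.
Qed.
Arguments tsmall [t] H eps Heps.

Section Seqs.
Variable I : finType.
Implicit Types u v : nat -> vec I.

Lemma cvn_evn u l : cvn u l -> forall eps, 0 < eps -> evn (fun k => n1 (vsub (u k) l) < eps).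
Proof. move=> H eps He; have [N HN] := H eps He; by exists N. Qed.
Arguments cvn_evn [u l] H eps Heps.


Lemma cvn_bounded u l : cvn u l -> evn (fun k => n1 (u k) <= n1 l + 1).
Proof.
move=> H; apply: (evn_mono (cvn_evn H 1 Rlt_0_1)) => k Hk.
have -> : u k = vadd (vsub (u k) l) l by apply: vext => i; rewrite /vadd /vsub; ring.
apply: Rle_trans (n1_add _ _) _; lra.
Qed.

Lemma cvn_intro u l : (forall eps, 0 < eps -> evn (fun k => n1 (vsub (u k) l) <= eps)) -> cvn u l.
Proof.
move=> H eps He; have [N HN] := H (eps / 2) ltac:(lra); exists N => k Hk.
have := HN k Hk; lra.
Qed.

Lemma cvn_ext u v l : evn (fun k => u k = v k) -> cvn u l -> cvn v l.
Proof.
move=> E H; apply: cvn_intro => eps He.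
apply: (evn_mono (evn_and E (cvn_evn H eps He))) => k [-> Hk]; lra.
Qed.

Lemma cvn_const (l : vec I) : cvn (fun _ => l) l.
Proof.
move=> eps He; exists 0%nat => k _.
have -> : vsub l l = vzero by apply: vext => i; rewrite /vsub /vzero; ring.
by rewrite n1_zero.
Qed.

Lemma cvn_add u v a b : cvn u a -> cvn v b -> cvn (fun k => vadd (u k) (v k)) (vadd a b).
Proof.
move=> Hu Hv; apply: cvn_intro => eps He.
apply: (evn_mono (evn_and (cvn_evn Hu (eps/2) ltac:(lra)) (cvn_evn Hv (eps/2) ltac:(lra)))) => k [H1 H2].
have -> : vsub (vadd (u k) (v k)) (vadd a b) = vadd (vsub (u k) a) (vsub (v k) b).
  apply: vext => i; rewrite /vadd /vsub; ring.
apply: Rle_trans (n1_add _ _) _; lra.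
Qed.

Lemma cvn_sub u v a b : cvn u a -> cvn v b -> cvn (fun k => vsub (u k) (v k)) (vsub a b).
Proof.
move=> Hu Hv; apply: cvn_intro => eps He.
apply: (evn_mono (evn_and (cvn_evn Hu (eps/2) ltac:(lra)) (cvn_evn Hv (eps/2) ltac:(lra)))) => k [H1 H2].
have -> : vsub (vsub (u k) (v k)) (vsub a b) = vsub (vsub (u k) a) (vsub (v k) b).
  apply: vext => i; rewrite /vadd /vsub; ring.
apply: Rle_trans (n1_sub _ _) _; lra.
Qed.

Lemma cvn_zero u : (forall eps, 0 < eps -> evn (fun k => n1 (u k) <= eps)) -> cvn u vzero.
Proof.
move=> H; apply: cvn_intro => eps He; apply: (evn_mono (H eps He)) => k.
have -> : vsub (u k) vzero = u k by apply: vext => i; rewrite /vsub /vzero; ring.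
done.
Qed.

Lemma cvn_unique u a b : cvn u a -> cvn u b -> a = b.
Proof.
move=> Ha Hb.
suff : vsub a b = vzero.
  move=> E; apply: vext => i; have := f_equal (fun w => w i) E; rewrite /vsub /vzero; lra.
apply: n1_le_eq0 => eps He.
have [K HK] := evn_and (cvn_evn Ha (eps/2) ltac:(lra)) (cvn_evn Hb (eps/2) ltac:(lra)).
have [H1 H2] := HK K (leqnn K).
apply: Rle_trans (n1_tri _ (u K) _) _; rewrite n1_subC in H1; lra.
Qed.

End Seqs.
Arguments cvn_evn [I u l] H eps Heps.

Lemma cvn_lin (I J : finType) (A : mat J I) (u : nat -> vec I) l :
  cvn u l -> cvn (fun k => mulmv A (u k)) (mulmv A l).
Proof.
move=> H; apply: cvn_intro => eps He.
have Hm := mnorm_ge0 A.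
have Hp : 0 < eps / (mnorm A + 1) by apply: Rdiv_lt_0_compat; lra.
apply: (evn_mono (cvn_evn H _ Hp)) => k Hk.
rewrite -mulmv_sub; apply: Rle_trans (mulmv_bound _ _) _.
have := n1_ge0 (vsub (u k) l) => H0.
apply: Rle_trans (_ : (mnorm A + 1) * n1 (vsub (u k) l) <= _); first nra.
apply: Rle_trans (Rmult_le_compat_l _ _ _ _ (Rlt_le _ _ Hk)) _; first lra.
right; field; lra.
Qed.

Lemma cvn_matvec (I J : finType) (Mk : nat -> mat J I) (A : mat J I) (u : nat -> vec I) l :
  (forall eps, 0 < eps -> evn (fun k => mnorm (msub (Mk k) A) <= eps)) ->
  cvn u l -> cvn (fun k => mulmv (Mk k) (u k)) (mulmv A l).
Proof.
move=> HM Hu; apply: cvn_intro => eps He.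
have Hl := n1_ge0 l; have Hm := mnorm_ge0 A.
set e1 := eps / (2 * (n1 l + 1)).
have He1 : 0 < e1 by apply: Rdiv_lt_0_compat; lra.
set e2 := eps / (2 * (mnorm A + 1)).
have He2 : 0 < e2 by apply: Rdiv_lt_0_compat; lra.
have E := evn_and (evn_and (HM e1 He1) (cvn_bounded Hu)) (cvn_evn Hu e2 He2).
apply: (evn_mono E) => k [[H1 H2] H3].
have -> : vsub (mulmv (Mk k) (u k)) (mulmv A l) =
  vadd (mulmv (msub (Mk k) A) (u k)) (mulmv A (vsub (u k) l)).
  rewrite mulmv_msub mulmv_sub; apply: vext => i; rewrite /vadd /vsub; ring.
apply: Rle_trans (n1_add _ _) _.
have B1 := mulmv_bound (msub (Mk k) A) (u k).
have B2 := mulmv_bound A (vsub (u k) l).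
have := n1_ge0 (u k); have := mnorm_ge0 (msub (Mk k) A); have := n1_ge0 (vsub (u k) l) => *.
have C1 : mnorm (msub (Mk k) A) * n1 (u k) <= e1 * (n1 l + 1).
  apply: Rmult_le_compat; lra.
have C2 : mnorm A * n1 (vsub (u k) l) <= (mnorm A + 1) * e2.
  apply: Rmult_le_compat; lra.
have : e1 * (n1 l + 1) = eps / 2 by rewrite /e1; field; lra.
have : (mnorm A + 1) * e2 = eps / 2 by rewrite /e2; field; lra.
lra.
Qed.

Lemma cvn_scale_small (I : finType) (t : nat -> R) (u : nat -> vec I) l :
  Un_cv t 0 -> cvn u l -> forall eps, 0 < eps -> evn (fun k => n1 (vscale (t k) (u k)) < eps).
Proof.
move=> Ht Hu eps He.
have Hl := n1_ge0 l.
apply: (evn_mono (evn_and (tsmall Ht (eps / (n1 l + 1)) ltac:(apply: Rdiv_lt_0_compat; lra)) (cvn_bounded Hu))) => k [H1 H2].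
rewrite n1_scale.
have := Rabs_pos (t k); have := n1_ge0 (u k) => *.
apply: (Rle_lt_trans _ (Rabs (t k) * (n1 l + 1))).
  apply: Rmult_le_compat_l; lra.
have := Rmult_lt_compat_r (n1 l + 1) _ _ ltac:(lra) H1.
replace (eps / (n1 l + 1) * (n1 l + 1)) with eps by (field; lra). done.
Qed.

Arguments cvn_scale_small [I t u l] Ht Hu eps Heps.

Lemma dq_lemma (I J : finType) (f : vec I -> vec J) L z (t : nat -> R) (u : nat -> vec I) l :
  D1 f L z -> (forall k, 0 < t k) -> Un_cv t 0 -> cvn u l ->
  cvn (fun k => vscale (/ t k) (vsub (f (vadd z (vscale (t k) (u k)))) (f z))) (mulmv L l).
Proof.
move=> HD Ht0 Ht Hu.
have Hl := n1_ge0 l.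
suff H : cvn (fun k => vsub (vscale (/ t k) (vsub (f (vadd z (vscale (t k) (u k)))) (f z))) (mulmv L (u k))) vzero.
  have := cvn_add H (cvn_lin L Hu).
  have -> : vadd vzero (mulmv L l) = mulmv L l by apply: vext => i; rewrite /vadd /vzero; ring.
  apply: cvn_ext; apply: evn_true => k; apply: vext => i; rewrite /vadd /vsub; ring.
apply: cvn_zero => eps He.
have [d [Hd Hy]] := HD (eps / (n1 l + 1)) ltac:(apply: Rdiv_lt_0_compat; lra).
apply: (evn_mono (evn_and (cvn_scale_small Ht Hu _ Hd) (cvn_bounded Hu))) => k [H1 H2].
set y := vadd z (vscale (t k) (u k)).
have Hyz : vsub y z = vscale (t k) (u k) by apply: vext => i; rewrite /y /vsub /vadd; ring.
have := Hy y; rewrite Hyz => /(_ H1) Hb.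
have Htk := Ht0 k.
have -> : vsub (vscale (/ t k) (vsub (f y) (f z))) (mulmv L (u k)) =
  vscale (/ t k) (vsub (vsub (f y) (f z)) (mulmv L (vscale (t k) (u k)))).
  rewrite mulmv_scale; apply: vext => i; rewrite /vsub /vscale; field; lra.
rewrite n1_scale n1_scale in Hb *. rewrite Rabs_right in Hb; last lra.
rewrite Rabs_right; last by apply: Rle_ge; apply: Rlt_le; apply: Rinv_0_lt_compat.
apply: (Rmult_le_reg_l (t k)) => //.
rewrite -Rmult_assoc Rinv_r; last lra.
rewrite Rmult_1_l; apply: Rle_trans Hb _.
have := n1_ge0 (u k) => H0.
replace (eps / (n1 l + 1) * (t k * n1 (u k))) with (t k * (eps * (n1 (u k) / (n1 l + 1)))) by (field; lra).
apply: Rmult_le_compat_l; first lra.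
rewrite -[X in _ <= X]Rmult_1_r; apply: Rmult_le_compat_l; first lra.
apply: (Rmult_le_reg_r (n1 l + 1)); first lra.
replace (n1 (u k) / (n1 l + 1) * (n1 l + 1)) with (n1 (u k)) by (field; lra). lra.
Qed.

Definition TCe {I : finType} (S : vec I -> Prop) (a w : vec I) : Prop :=
  exists (t : nat -> R) (wk : nat -> vec I),
    (forall k, 0 < t k) /\ Un_cv t 0 /\ cvn wk w /\
    evn (fun k => S (vadd a (vscale (t k) (wk k)))).

Lemma TCe_iff (I : finType) (S : vec I -> Prop) a w : tangent_cone S a w <-> TCe S a w.
Proof.
split.
- move=> [t [wk [H1 [H2 [H3 H4]]]]]; exists t, wk; split=> //; split=> //; split.
  + by apply/seq_cvn.
  + exact: evn_true.
- move=> [t [wk [H1 [H2 [H3 [K H4]]]]]].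
  exists (fun k => t (k + K)%nat), (fun k => wk (k + K)%nat); split; first by move=> k.
  split.
    move=> eps He; have [N HN] := H2 eps He; exists N => n Hn; apply: HN.
    apply/leP; apply: leq_trans (leq_addr K n); exact/leP.
  split.
    apply/seq_cvn; move=> eps He; have [N HN] := H3 eps He; exists N => n Hn; apply: HN.
    exact: leq_trans Hn (leq_addr K n).
  move=> k; apply: H4; exact: leq_addl.
Qed.

Definition TCg {I J : finType} (S : vec I -> vec J -> Prop) (a : vec I) (b : vec J)
   (v : vec I) (vs : vec J) : Prop :=
  exists (t : nat -> R) (vk : nat -> vec I) (vsk : nat -> vec J),
    (forall k, 0 < t k) /\ Un_cv t 0 /\ cvn vk v /\ cvn vsk vs /\
    evn (fun k => S (vadd a (vscale (t k) (vk k))) (vadd b (vscale (t k) (vsk k)))).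

Lemma n1_vpair (I J : finType) (u : vec I) (v : vec J) : n1 (vpair u v) = n1 u + n1 v.
Proof. by rewrite /n1 sum_sumType. Qed.

Lemma n1_inl (I J : finType) (p : vec (I + J)%type) : n1 (fun i => p (inl i)) <= n1 p.
Proof.
rewrite {2}/n1 sum_sumType.
have := @sum_ge0 J (fun j => Rabs (p (inr j))) (fun j => Rabs_pos _). rewrite /n1; lra.
Qed.
Lemma n1_inr (I J : finType) (p : vec (I + J)%type) : n1 (fun j => p (inr j)) <= n1 p.
Proof.
rewrite {2}/n1 sum_sumType.
have := @sum_ge0 I (fun j => Rabs (p (inl j))) (fun j => Rabs_pos _). rewrite /n1; lra.
Qed.

Lemma TCg_iff (I J : finType) (S : vec I -> vec J -> Prop) a b v vs :
  tangent_cone (gph S) (vpair a b) (vpair v vs) <-> TCg S a b v vs.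
Proof.
rewrite TCe_iff; split.
- move=> [t [wk [H1 [H2 [H3 H4]]]]].
  exists t, (fun k i => wk k (inl i)), (fun k j => wk k (inr j)); split=> //; split=> //; split; [|split].
  + move=> eps He; have [N HN] := H3 eps He; exists N => k Hk.
    apply: Rle_lt_trans (HN k Hk); exact: (n1_inl (vsub (wk k) (vpair v vs))).
  + move=> eps He; have [N HN] := H3 eps He; exists N => k Hk.
    apply: Rle_lt_trans (HN k Hk); exact: (n1_inr (vsub (wk k) (vpair v vs))).
  + exact: H4.
- move=> [t [vk [vsk [H1 [H2 [H3 [H4 H5]]]]]]].
  exists t, (fun k => vpair (vk k) (vsk k)); split=> //; split=> //; split=> //.
  apply: cvn_intro => eps He.
  apply: (evn_mono (evn_and (cvn_evn H3 (eps/2) ltac:(lra)) (cvn_evn H4 (eps/2) ltac:(lra)))) => k [B1 B2].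
  have -> : vsub (vpair (vk k) (vsk k)) (vpair v vs) = vpair (vsub (vk k) v) (vsub (vsk k) vs).
    by apply: vext => -[i|j].
  rewrite n1_vpair; lra.
Qed.

Lemma choose_seq (T : Type) (d : T) (C : nat -> Prop) (P : nat -> T -> Prop) :
  (forall k, C k -> exists x, P k x) -> exists s : nat -> T, forall k, C k -> P k (s k).
Proof.
move=> H.
have H' : forall k, exists x, C k -> P k x.
  move=> k; case: (classic (C k)) => Hc.
  - have [x Hx] := H k Hc; by exists x.
  - by exists d.
exists (fun k => proj1_sig (constructive_indefinite_description _ (H' k))).
move=> k; exact: (proj2_sig (constructive_indefinite_description _ (H' k))).
Qed.

Lemma dot_mulTmv (I J : finType) (A : mat J I) (u : vec I) (y : vec J) :
  dot (mulTmv A y) u = dot y (mulmv A u).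
Proof. by rewrite dot_sym -dot_mulmv dot_sym. Qed.

Lemma RTA (I J : finType) (A : mat J I) (R0 : mat I J) :
  (forall y, mulmv A (mulmv R0 y) = y) -> forall eta, mulTmv R0 (mulTmv A eta) = eta.
Proof.
move=> HR eta; apply: vext => j.
rewrite -[LHS](dot_ev (mulTmv R0 (mulTmv A eta)) j) -[RHS](dot_ev eta j).
rewrite !dot_mulTmv HR //.
Qed.

Lemma mulTmv_sub (I J : finType) (A : mat J I) u v : mulTmv A (vsub u v) = vsub (mulTmv A u) (mulTmv A v).
Proof. by rewrite !mulTmv_mtr mulmv_sub. Qed.
Lemma mulTmv_add (I J : finType) (A : mat J I) u v : mulTmv A (vadd u v) = vadd (mulTmv A u) (mulTmv A v).
Proof. by rewrite !mulTmv_mtr mulmv_add. Qed.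
Lemma mulTmv_scale (I J : finType) (A : mat J I) t u : mulTmv A (vscale t u) = vscale t (mulTmv A u).
Proof. by rewrite !mulTmv_mtr mulmv_scale. Qed.
Lemma mulTmv_msub (I J : finType) (A B : mat J I) u : mulTmv (msub A B) u = vsub (mulTmv A u) (mulTmv B u).
Proof. apply: vext => i; rewrite /mulTmv /vsub -sum_sub; apply: sum_ext => j; rewrite /msub; ring. Qed.
Lemma msub_mtr (I J : finType) (A B : mat J I) : msub (mtr A) (mtr B) = mtr (msub A B).
Proof. by []. Qed.

Lemma zero_tc (I : finType) (S : vec I -> Prop) a : S a -> tangent_cone S a vzero.
Proof.
move=> Ha; apply/TCe_iff.
exists (fun k => (/ 2) ^ k), (fun _ => vzero); split; first by move=> k; exact: half_pos.
split.
  move=> eps He; have [N HN] := half_small He; exists N => k /leP Hk.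
  rewrite /Rdist Rminus_0_r Rabs_right; last by apply: Rle_ge; apply: Rlt_le; exact: half_pos.
  exact: HN.
split; first exact: cvn_const.
apply: evn_true => k.
have -> : vadd a (vscale ((/ 2) ^ k) vzero) = a by apply: vext => i; rewrite /vadd /vscale /vzero; ring.
done.
Qed.

Section Core.
Variables (I J : finType) (F : vec I -> vec J) (M : vec I -> mat J I) (x0 : vec I)
  (Theta : vec J -> Prop) (Omega : vec I -> Prop) (rho : R) (mu0 : vec J) (H : mat I I) (R0 : mat I J).
Hypothesis HD : forall x, D1 F (M x) x.
Hypothesis HMc : contm M x0.
Hypothesis HR0 : forall y, mulmv (M x0) (mulmv R0 y) = y.
Hypothesis Hrho : 0 < rho.
Hypothesis HOm : forall x, n1 (vsub x x0) < rho -> (Omega x <-> Theta (F x)).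
Hypothesis Hmu : regular_normal Theta (F x0) mu0.
Hypothesis HH : D1 (fun x => mulTmv (M x) mu0) H x0.

Local Notation A := (M x0).
Local Notation c := (mnorm R0 + 1).
Local Notation eps0 := (/ (2 * c * (INR #|J| + 1))).

Lemma c_pos : 0 < c.
Proof. have := mnorm_ge0 R0; lra. Qed.

Lemma HcR y : n1 (mulmv R0 y) <= c * n1 y.
Proof.
apply: Rle_trans (mulmv_bound _ _) _; apply: Rmult_le_compat_r; [exact: n1_ge0|lra].
Qed.

Lemma eps0_pos : 0 < eps0.
Proof. have := c_pos; have := pos_INR #|J| => *. apply: Rinv_0_lt_compat. nra. Qed.

Lemma radius_exists : exists r, 0 < r /\ r <= rho /\ forall z, n1 (vsub z x0) < r -> mnorm (msub (M z) A) <= eps0.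
Proof.
have [d [Hd Hz]] := HMc eps0_pos.
exists (Rmin d rho); split; first exact: Rmin_glb_lt.
split; first exact: Rmin_r.
move=> z Hzx; apply: Rlt_le; apply: Hz; apply: Rlt_le_trans Hzx (Rmin_l _ _).
Qed.


Variable r : R.
Hypothesis Hr : 0 < r.
Hypothesis Hrrho : r <= rho.
Hypothesis HMr : forall z, n1 (vsub z x0) < r -> mnorm (msub (M z) A) <= eps0.

Lemma Hdev a b : n1 (vsub a x0) < r -> n1 (vsub b x0) < r ->
  n1 (vsub (vsub (F a) (F b)) (mulmv A (vsub a b))) <= n1 (vsub a b) / (2 * c).
Proof.
move=> Ha Hb.
apply: Rle_trans (mvi (M := M) (A := A) (x0 := x0) (r := r) (eps := eps0) _ Ha Hb) _.
  move=> z Hz; split; [exact: HD | exact: HMr].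
have := c_pos; have := pos_INR #|J|; have := n1_ge0 (vsub a b) => *.
replace (INR #|J| * eps0 * n1 (vsub a b)) with (n1 (vsub a b) / (2 * c) * (INR #|J| / (INR #|J| + 1)))
  by (field; lra).
rewrite -[X in _ <= X]Rmult_1_r; apply: Rmult_le_compat_l.
  apply: Rmult_le_pos; [lra| apply: Rlt_le; apply: Rinv_0_lt_compat; lra].
apply: (Rmult_le_reg_r (INR #|J| + 1)); first lra.
replace (INR #|J| / (INR #|J| + 1) * (INR #|J| + 1)) with (INR #|J|) by (field; lra). lra.
Qed.

Lemma LGx x y : n1 (vsub x x0) < r / 2 -> 2 * c * n1 (vsub (F x) y) < r / 2 ->
  exists x', F x' = y /\ n1 (vsub x' x) <= 2 * c * n1 (vsub (F x) y).
Proof. move=> Hx Hy; exact: (LG_main HR0 c_pos HcR Hdev Hx Hy). Qed.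

Lemma RI z : n1 (vsub z x0) < r -> exists R : mat I J, forall y, mulmv (M z) (mulmv R y) = y.
Proof.
move=> Hz; apply: (lin_rinv HR0 c_pos HcR).
apply: Rle_trans (HMr Hz) _.
have := c_pos; have := pos_INR #|J| => *.
apply: Rinv_le_contravar; first lra.
have : 2 * c * 1 <= 2 * c * (INR #|J| + 1) by apply: Rmult_le_compat_l; lra.
lra.
Qed.

Lemma Om x : n1 (vsub x x0) < r -> (Omega x <-> Theta (F x)).
Proof. move=> Hx; apply: HOm; lra. Qed.

Lemma ball_evn z (t : nat -> R) (u : nat -> vec I) l q :
  n1 (vsub z x0) < q -> Un_cv t 0 -> cvn u l ->
  evn (fun k => n1 (vsub (vadd z (vscale (t k) (u k))) x0) < q).
Proof.
move=> Hz Ht Hu.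
apply: (evn_mono (cvn_scale_small Ht Hu (q - n1 (vsub z x0)) ltac:(lra))) => k Hk.
have -> : vsub (vadd z (vscale (t k) (u k))) x0 = vadd (vsub z x0) (vscale (t k) (u k)).
  apply: vext => i; rewrite /vadd /vsub; ring.
apply: Rle_lt_trans (n1_add _ _) _; lra.
Qed.

Lemma a_easy z mu : n1 (vsub z x0) < r -> regular_normal Theta (F z) mu ->
  regular_normal Omega z (mulTmv (M z) mu).
Proof.
move=> Hz [HT Hpol]; split; first by apply/(Om Hz).
move=> w /TCe_iff [t [wk [Ht0 [Ht [Hw HS]]]]].
rewrite dot_mulTmv; apply: Hpol; apply/TCe_iff.
exists t, (fun k => vscale (/ t k) (vsub (F (vadd z (vscale (t k) (wk k)))) (F z))).
split=> //; split=> //; split; first exact: dq_lemma.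
apply: (evn_mono (evn_and HS (ball_evn Hz Ht Hw))) => k [HO Hb].
have -> : vadd (F z) (vscale (t k) (vscale (/ t k) (vsub (F (vadd z (vscale (t k) (wk k)))) (F z))))
  = F (vadd z (vscale (t k) (wk k))).
  apply: vext => i; rewrite /vadd /vscale /vsub; field; have := Ht0 k; lra.
by apply/(Om Hb).
Qed.


Lemma LGlift z u (tau : nat -> R) (yk : nat -> vec J) :
  n1 (vsub z x0) < r / 4 -> (forall k, 0 < tau k) -> Un_cv tau 0 ->
  cvn (fun k => vscale (/ tau k) (vsub (yk k) (F z))) (mulmv (M z) u) ->
  exists uk, cvn uk u /\ evn (fun k => F (vadd z (vscale (tau k) (uk k))) = yk k).
Proof.
move=> Hz Ht0 Ht Hy.
have Hc := c_pos.
pose pk := fun k => vadd z (vscale (tau k) u).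
have [s Hs] := choose_seq z (C := fun k => n1 (vsub (pk k) x0) < r / 2 /\
    2 * c * n1 (vsub (F (pk k)) (yk k)) < r / 2)
  (P := fun k x => F x = yk k /\ n1 (vsub x (pk k)) <= 2 * c * n1 (vsub (F (pk k)) (yk k)))
  (fun k HC => LGx (proj1 HC) (proj2 HC)).
have Hres : forall eps, 0 < eps -> evn (fun k => n1 (vsub (F (pk k)) (yk k)) <= eps * tau k).
  move=> eps He.
  have Hdq := dq_lemma (HD z) Ht0 Ht (cvn_const u).
  have Hd := cvn_sub Hdq Hy.
  have E0 : vsub (mulmv (M z) u) (mulmv (M z) u) = vzero.
    apply: vext => i; rewrite /vsub /vzero; ring.
  rewrite E0 in Hd.
  apply: (evn_mono (cvn_evn Hd eps He)) => k Hk.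
  have E : vsub (vsub (vscale (/ tau k) (vsub (F (vadd z (vscale (tau k) u))) (F z))) (vscale (/ tau k) (vsub (yk k) (F z)))) vzero
      = vscale (/ tau k) (vsub (F (pk k)) (yk k)).
    apply: vext => i; rewrite /pk /vsub /vscale /vzero; ring.
  rewrite E n1_scale Rabs_right in Hk; last by apply: Rle_ge; apply: Rlt_le; apply: Rinv_0_lt_compat.
  have Htk := Ht0 k.
  have H3 := Rmult_le_compat_l (tau k) _ _ (Rlt_le _ _ Htk) (Rlt_le _ _ Hk).
  replace (tau k * (/ tau k * n1 (vsub (F (pk k)) (yk k)))) with (n1 (vsub (F (pk k)) (yk k))) in H3 by (field; lra).
  lra.
have Hcond : evn (fun k => n1 (vsub (pk k) x0) < r / 2 /\ 2 * c * n1 (vsub (F (pk k)) (yk k)) < r / 2).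
  have Hp : 0 < r / (4 * c) by apply: Rdiv_lt_0_compat; lra.
  have Hz2 : n1 (vsub z x0) < r / 2 by lra.
  apply: (evn_mono (evn_and (evn_and (ball_evn Hz2 Ht (cvn_const u)) (Hres 1 Rlt_0_1)) (tsmall Ht _ Hp))).
  move=> k [[H1 H2] H3]; split; first exact: H1.
  have Htk := Ht0 k. rewrite Rabs_right in H3; last lra.
  have : 2 * c * n1 (vsub (F (pk k)) (yk k)) <= 2 * c * (1 * tau k) by apply: Rmult_le_compat_l; lra.
  have : 2 * c * (1 * tau k) < 2 * c * (r / (4 * c)) by apply: Rmult_lt_compat_l; lra.
  have : 2 * c * (r / (4 * c)) = r / 2 by field; lra.
  lra.
exists (fun k => vscale (/ tau k) (vsub (s k) z)); split.
- apply: cvn_intro => eps He.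
  have He' : 0 < eps / (2 * c) by apply: Rdiv_lt_0_compat; lra.
  apply: (evn_mono (evn_and Hcond (Hres _ He'))) => k [HC HR].
  have [_ Hb] := Hs k HC.
  have Htk := Ht0 k.
  have -> : vsub (vscale (/ tau k) (vsub (s k) z)) u = vscale (/ tau k) (vsub (s k) (pk k)).
    apply: vext => i; rewrite /pk /vsub /vscale /vadd; field; lra.
  rewrite n1_scale Rabs_right; last by apply: Rle_ge; apply: Rlt_le; apply: Rinv_0_lt_compat.
  apply: (Rmult_le_reg_l (tau k)) => //.
  rewrite -Rmult_assoc Rinv_r; last lra.
  rewrite Rmult_1_l; apply: Rle_trans Hb _.
  apply: Rle_trans (Rmult_le_compat_l (2 * c) _ _ _ HR) _; first lra.
  right; field; lra.
- apply: (evn_mono Hcond) => k HC.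
  have [HF _] := Hs k HC.
  have -> : vadd z (vscale (tau k) (vscale (/ tau k) (vsub (s k) z))) = s k.
    apply: vext => i; rewrite /vadd /vscale /vsub; field; have := Ht0 k; lra.
  exact: HF.
Qed.

Lemma TL z u : n1 (vsub z x0) < r / 4 -> tangent_cone Theta (F z) (mulmv (M z) u) -> tangent_cone Omega z u.
Proof.
move=> Hz /TCe_iff [tau [zk [Ht0 [Ht [Hzk HT]]]]].
have Hy : cvn (fun k => vscale (/ tau k) (vsub (vadd (F z) (vscale (tau k) (zk k))) (F z))) (mulmv (M z) u).
  apply: cvn_ext Hzk; apply: evn_true => k; apply: vext => i.
  rewrite /vscale /vsub /vadd; field; have := Ht0 k; lra.
have [uk [Hu HF]] := LGlift Hz Ht0 Ht Hy.
apply/TCe_iff; exists tau, uk; split=> //; split=> //; split=> //.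
have Hz' : n1 (vsub z x0) < r by lra.
apply: (evn_mono (evn_and (evn_and HF HT) (ball_evn Hz' Ht Hu))) => k [[E HTk] Hb].
apply/(Om Hb); rewrite E; exact: HTk.
Qed.

Lemma a_hard z vs : n1 (vsub z x0) < r / 4 -> regular_normal Omega z vs ->
  exists mu, regular_normal Theta (F z) mu /\ vs = mulTmv (M z) mu.
Proof.
move=> Hz [HO Hpol].
have Hz' : n1 (vsub z x0) < r by lra.
have HT : Theta (F z) by apply/(Om Hz').
have [R HR] := RI Hz'.
have Hker : forall w, mulmv (M z) w = vzero -> dot vs w <= 0.
  move=> w Hw; apply: Hpol; apply: TL => //; rewrite Hw; exact: zero_tc.
have Hkey : forall v, dot vs v = dot vs (mulmv R (mulmv (M z) v)).
  move=> v.
  have H1 := Hker (vsub v (mulmv R (mulmv (M z) v))).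
  have H2 := Hker (vsub (mulmv R (mulmv (M z) v)) v).
  rewrite !mulmv_sub HR !dot_subr in H1 H2.
  have E : forall a : vec J, vsub a a = vzero by move=> a; apply: vext => i; rewrite /vsub /vzero; ring.
  have := H1 (E _); have := H2 (E _); lra.
exists (mulTmv R vs); split; last first.
  apply: vext => i.
  rewrite -(dot_ev vs i) Hkey -!dot_mulTmv dot_ev //.
split=> // zeta Hzeta.
rewrite dot_mulTmv; apply: Hpol; apply: TL => //; rewrite HR //.
Qed.


Lemma Mconv (t : nat -> R) (u : nat -> vec I) l : Un_cv t 0 -> cvn u l ->
  forall eps, 0 < eps -> evn (fun k => mnorm (msub (M (vadd x0 (vscale (t k) (u k)))) A) <= eps).
Proof.
move=> Ht Hu eps He.
have [d [Hd Hz]] := HMc He.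
have H0 : n1 (vsub x0 x0) < d.
  have -> : vsub x0 x0 = vzero by apply: vext => i; rewrite /vsub /vzero; ring.
  by rewrite n1_zero.
apply: (evn_mono (ball_evn H0 Ht Hu)) => k Hk; apply: Rlt_le; exact: Hz.
Qed.

Lemma x0_ball q : 0 < q -> n1 (vsub x0 x0) < q.
Proof.
move=> Hq; have -> : vsub x0 x0 = vzero by apply: vext => i; rewrite /vsub /vzero; ring.
by rewrite n1_zero.
Qed.

Lemma core_c v xi : TCg (regular_normal Theta) (F x0) mu0 (mulmv A v) xi ->
  TCg (regular_normal Omega) x0 (mulTmv A mu0) v (vadd (mulmv H v) (mulTmv A xi)).
Proof.
move=> [tau [zk [xik [Ht0 [Ht [Hz [Hxi HS]]]]]]].
have Hy : cvn (fun k => vscale (/ tau k) (vsub (vadd (F x0) (vscale (tau k) (zk k))) (F x0))) (mulmv A v).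
  apply: cvn_ext Hz; apply: evn_true => k; apply: vext => i.
  rewrite /vscale /vsub /vadd; field; have := Ht0 k; lra.
have Hx0 : n1 (vsub x0 x0) < r / 4 by apply: x0_ball; lra.
have [vk [Hv HF]] := LGlift Hx0 Ht0 Ht Hy.
pose xk := fun k => vadd x0 (vscale (tau k) (vk k)).
exists tau, vk, (fun k => vadd (vscale (/ tau k) (vsub (mulTmv (M (xk k)) mu0) (mulTmv A mu0)))
                               (mulTmv (M (xk k)) (xik k))).
split=> //; split=> //; split=> //; split.
- apply: cvn_add; first exact: (dq_lemma HH Ht0 Ht Hv).
  apply: (cvn_matvec (Mk := fun k => mtr (M (xk k))) (A := mtr A)) => // eps He.
  apply: (evn_mono (Mconv Ht Hv He)) => k Hk.
  by rewrite msub_mtr mnorm_mtr.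
- have Hxr : n1 (vsub x0 x0) < r by apply: x0_ball.
  apply: (evn_mono (evn_and (evn_and HF HS) (ball_evn Hxr Ht Hv))) => k [[E HSk] Hb].
  have Htk := Ht0 k.
  have -> : vadd (mulTmv A mu0) (vscale (tau k) (vadd (vscale (/ tau k) (vsub (mulTmv (M (xk k)) mu0) (mulTmv A mu0)))
                               (mulTmv (M (xk k)) (xik k)))) = mulTmv (M (xk k)) (vadd mu0 (vscale (tau k) (xik k))).
    rewrite mulTmv_add mulTmv_scale; apply: vext => i; rewrite /vadd /vscale /vsub; field; lra.
  apply: a_easy => //. rewrite /xk E //.
Qed.

Lemma core_b v vs : TCg (regular_normal Omega) x0 (mulTmv A mu0) v vs ->
  exists xi, TCg (regular_normal Theta) (F x0) mu0 (mulmv A v) xi /\ vs = vadd (mulmv H v) (mulTmv A xi).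
Proof.
move=> [t [vk [vsk [Ht0 [Ht [Hv [Hvs HS]]]]]]].
have Hc := c_pos.
pose xk := fun k => vadd x0 (vscale (t k) (vk k)).
have Hx0 : n1 (vsub x0 x0) < r / 4 by apply: x0_ball; lra.
have Hball4 := ball_evn Hx0 Ht Hv.
have [mu Hmu'] := choose_seq mu0
  (C := fun k => n1 (vsub (xk k) x0) < r / 4 /\
                 regular_normal Omega (xk k) (vadd (mulTmv A mu0) (vscale (t k) (vsk k))))
  (P := fun k m => regular_normal Theta (F (xk k)) m /\
                   vadd (mulTmv A mu0) (vscale (t k) (vsk k)) = mulTmv (M (xk k)) m)
  (fun k HC => a_hard (proj1 HC) (proj2 HC)).
have Hcond := evn_and Hball4 HS.
pose xik := fun k => vscale (/ t k) (vsub (mu k) mu0).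
pose qk := fun k => vsub (vsk k) (vscale (/ t k) (vsub (mulTmv (M (xk k)) mu0) (mulTmv A mu0))).
set ql := vsub vs (mulmv H v).
have Hq : cvn qk ql := cvn_sub Hvs (dq_lemma HH Ht0 Ht Hv).
have Hid : evn (fun k => mulTmv (M (xk k)) (xik k) = qk k).
  apply: (evn_mono Hcond) => k HC.
  have [_ E] := Hmu' k HC.
  have Htk := Ht0 k.
  rewrite /xik mulTmv_scale mulTmv_sub -E; apply: vext => i; rewrite /qk /vscale /vsub /vadd; field; lra.
pose mk := fun k => mnorm (msub (M (xk k)) A).
have Hmk := Mconv Ht Hv.
have Hmk0 : forall k, 0 <= mk k by move=> k; exact: mnorm_ge0.
have Hxi_eq : evn (fun k => xik k = mulTmv R0 (vsub (qk k) (mulTmv (msub (M (xk k)) A) (xik k)))).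
  apply: (evn_mono Hid) => k E.
  rewrite -E mulTmv_msub.
  have -> : vsub (mulTmv (M (xk k)) (xik k)) (vsub (mulTmv (M (xk k)) (xik k)) (mulTmv A (xik k))) = mulTmv A (xik k).
    apply: vext => i; rewrite /vsub; ring.
  by rewrite (RTA HR0).
have HR0b : forall y, n1 (mulTmv R0 y) <= c * n1 y.
  move=> y; apply: Rle_trans (mulTmv_bound _ _) _; apply: Rmult_le_compat_r; [exact: n1_ge0|lra].
have Hdb : forall k, n1 (mulTmv (msub (M (xk k)) A) (xik k)) <= mk k * n1 (xik k).
  move=> k; exact: mulTmv_bound.
set B := 2 * c * (n1 ql + 1).
have HB : 0 < B by rewrite /B; have := n1_ge0 ql; nra.
have Hbnd : evn (fun k => n1 (xik k) <= B).
  have Hhalf : 0 < / (2 * c) by apply: Rinv_0_lt_compat; lra.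
  apply: (evn_mono (evn_and (evn_and Hxi_eq (Hmk _ Hhalf)) (cvn_bounded Hq))) => k [[E Hm] Hqb].
  have H1 : n1 (xik k) <= c * (n1 (qk k) + mk k * n1 (xik k)).
    rewrite {1}E; apply: Rle_trans (HR0b _) _; apply: Rmult_le_compat_l; first lra.
    apply: Rle_trans (n1_sub _ _) _; have := Hdb k; lra.
  have := n1_ge0 (xik k) => Hx.
  have H2 : c * (mk k * n1 (xik k)) <= n1 (xik k) / 2.
    have : c * mk k <= / 2.
      have := Rmult_le_compat_l c _ _ (Rlt_le _ _ Hc) Hm.
      replace (c * / (2 * c)) with (/ 2) by (field; lra). done.
    move=> Hcm; have := Rmult_le_compat_r (n1 (xik k)) _ _ Hx Hcm; lra.
  have : n1 (xik k) <= 2 * c * n1 (qk k) by lra.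
  rewrite /B; have : 2 * c * n1 (qk k) <= 2 * c * (n1 ql + 1) by apply: Rmult_le_compat_l; lra.
  lra.
set xi := mulTmv R0 ql.
have Hxi : cvn xik xi.
  apply: cvn_intro => eps He.
  have He1 : 0 < eps / (2 * c) by apply: Rdiv_lt_0_compat; lra.
  have He2 : 0 < eps / (2 * c * B) by apply: Rdiv_lt_0_compat; nra.
  apply: (evn_mono (evn_and (evn_and Hxi_eq (evn_and (Hmk _ He2) Hbnd)) (cvn_evn Hq _ He1))) =>
    k [[E [Hm Hb]] Hqk].
  have -> : vsub (xik k) xi = mulTmv R0 (vsub (vsub (qk k) ql) (mulTmv (msub (M (xk k)) A) (xik k))).
    rewrite {1}E /xi -mulTmv_sub; congr mulTmv; apply: vext => i; rewrite /vsub; ring.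
  apply: Rle_trans (HR0b _) _.
  have H1 : n1 (vsub (vsub (qk k) ql) (mulTmv (msub (M (xk k)) A) (xik k))) <= eps / (2 * c) + eps / (2 * c * B) * B.
    apply: Rle_trans (n1_sub _ _) _.
    have := Hdb k; have := Hmk0 k; have := n1_ge0 (xik k) => *.
    change (mk k <= eps / (2 * c * B)) in Hm.
    have : mk k * n1 (xik k) <= eps / (2 * c * B) * B by apply: Rmult_le_compat; lra.
    lra.
  have : eps / (2 * c) + eps / (2 * c * B) * B = eps / c by field; lra.
  move=> E2; rewrite E2 in H1.
  apply: Rle_trans (Rmult_le_compat_l c _ _ (Rlt_le _ _ Hc) H1) _.
  right; field; lra.
have Hql : ql = mulTmv A xi.
  apply: (cvn_unique Hq).
  apply: (cvn_ext (u := fun k => mulTmv (M (xk k)) (xik k))) => //.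
  apply: (cvn_matvec (Mk := fun k => mtr (M (xk k))) (A := mtr A)) => // eps He.
  apply: (evn_mono (Mconv Ht Hv He)) => k Hk.
  by rewrite msub_mtr mnorm_mtr.
exists xi; split; last first.
  rewrite -Hql /ql; apply: vext => i; rewrite /vadd /vsub; ring.
exists t, (fun k => vscale (/ t k) (vsub (F (xk k)) (F x0))), xik.
split=> //; split=> //; split; first exact: (dq_lemma (HD x0) Ht0 Ht Hv).
split=> //.
apply: (evn_mono Hcond) => k HC.
have [HT _] := Hmu' k HC.
have Htk := Ht0 k.
have -> : vadd (F x0) (vscale (t k) (vscale (/ t k) (vsub (F (xk k)) (F x0)))) = F (xk k).
  apply: vext => i; rewrite /vadd /vscale /vsub; field; lra.
have -> : vadd mu0 (vscale (t k) (xik k)) = mu k.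
  apply: vext => i; rewrite /xik /vadd /vscale /vsub; field; lra.
exact: HT.
Qed.

End Core.

Lemma mext (I J : finType) (A B : mat I J) : (forall i j, A i j = B i j) -> A = B.
Proof. move=> H; do 2 (apply: functional_extensionality => ?); exact: H. Qed.

Lemma mnorm_add (I J : finType) (A B : mat I J) : mnorm (madd A B) <= mnorm A + mnorm B.
Proof.
rewrite /mnorm -sum_add; apply: sum_le => i; rewrite -sum_add; apply: sum_le => j.
exact: Rabs_triang.
Qed.

Lemma mnorm_mmul (K J I : finType) (B : mat K J) (A : mat J I) : mnorm (mmul B A) <= mnorm B * mnorm A.
Proof.
rewrite /mnorm /mmul -sum_scalr; apply: sum_le => k.
apply: (Rle_trans _ (\big[Rplus/0]_(i : I) \big[Rplus/0]_(j : J) (Rabs (B k j) * Rabs (A j i)))).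
  apply: sum_le => i; apply: Rle_trans (sum_abs _) _; apply: sum_le => j; rewrite Rabs_mult; lra.
rewrite sum_swap -sum_scalr; apply: sum_le => j.
rewrite sum_scal; apply: Rmult_le_compat_l; first exact: Rabs_pos.
apply: (@sum_single J (fun j => \big[Rplus/0]_(i : I) Rabs (A j i)) j) => j'.
apply: sum_ge0 => i; exact: Rabs_pos.
Qed.

Lemma contm_comp (I J K L : finType) (P : vec J -> mat K L) (g : vec I -> vec J) x :
  contm P (g x) -> contv g x -> contm (fun y => P (g y)) x.
Proof.
move=> HP Hg eps He.
have [d1 [Hd1 H1]] := HP eps He.
have [d2 [Hd2 H2]] := Hg d1 Hd1.
exists d2; split=> // y Hy; exact: H1 (H2 y Hy).
Qed.

Lemma contm_mmul (I K J L : finType) (P : vec I -> mat K J) (Q : vec I -> mat J L) x :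
  contm P x -> contm Q x -> contm (fun y => mmul (P y) (Q y)) x.
Proof.
move=> HP HQ eps He.
have HmP := mnorm_ge0 (P x); have HmQ := mnorm_ge0 (Q x).
set e1 := eps / (2 * (mnorm (Q x) + 1)).
set e2 := Rmin 1 (eps / (2 * (mnorm (P x) + 1))).
have He1 : 0 < e1 by apply: Rdiv_lt_0_compat; lra.
have He2 : 0 < e2 by apply: Rmin_glb_lt; [lra|apply: Rdiv_lt_0_compat; lra].
have [d1 [Hd1 H1]] := HP e1 He1.
have [d2 [Hd2 H2]] := HQ e2 He2.
exists (Rmin d1 d2); split; first exact: Rmin_glb_lt.
move=> y Hy.
have A1 := H1 y (Rlt_le_trans _ _ _ Hy (Rmin_l _ _)).
have A2 := H2 y (Rlt_le_trans _ _ _ Hy (Rmin_r _ _)).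
have -> : msub (mmul (P y) (Q y)) (mmul (P x) (Q x)) =
  madd (mmul (msub (P y) (P x)) (Q y)) (mmul (P x) (msub (Q y) (Q x))).
  apply: mext => i j; rewrite /msub /madd /mmul -sum_add -sum_sub; apply: sum_ext => k; ring.
apply: Rle_lt_trans (mnorm_add _ _) _.
have B1 := mnorm_mmul (msub (P y) (P x)) (Q y).
have B2 := mnorm_mmul (P x) (msub (Q y) (Q x)).
have HQy : mnorm (Q y) <= mnorm (Q x) + 1.
  have -> : Q y = madd (msub (Q y) (Q x)) (Q x) by apply: mext => i j; rewrite /madd /msub; ring.
  apply: Rle_trans (mnorm_add _ _) _; have := Rmin_l 1 (eps / (2 * (mnorm (P x) + 1))); rewrite -/e2; lra.
have := mnorm_ge0 (msub (P y) (P x)); have := mnorm_ge0 (msub (Q y) (Q x)); have := mnorm_ge0 (Q y) => *.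
have C1 : mnorm (msub (P y) (P x)) * mnorm (Q y) < e1 * (mnorm (Q x) + 1).
  apply: (Rle_lt_trans _ (mnorm (msub (P y) (P x)) * (mnorm (Q x) + 1))).
    apply: Rmult_le_compat_l; lra.
  apply: Rmult_lt_compat_r; lra.
have C2 : mnorm (P x) * mnorm (msub (Q y) (Q x)) <= (mnorm (P x) + 1) * e2.
  apply: Rmult_le_compat; lra.
have : e1 * (mnorm (Q x) + 1) = eps / 2 by rewrite /e1; field; lra.
have : (mnorm (P x) + 1) * e2 <= eps / 2.
  have := Rmin_r 1 (eps / (2 * (mnorm (P x) + 1))); rewrite -/e2 => Hr.
  have := Rmult_le_compat_l (mnorm (P x) + 1) _ _ ltac:(lra) Hr.
  replace ((mnorm (P x) + 1) * (eps / (2 * (mnorm (P x) + 1)))) with (eps / 2) by (field; lra). done.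
lra.
Qed.

Lemma D1_prod (I J : finType) (P : vec I -> mat J I) (q : vec I -> vec J) x0 H1 Q :
  contm P x0 -> D1 (fun x => mulTmv (P x) (q x0)) H1 x0 -> D1 q Q x0 ->
  D1 (fun x => mulTmv (P x) (q x)) (madd H1 (mmul (mtr (P x0)) Q)) x0.
Proof.
move=> HP HH HQ eps He.
have HmP := mnorm_ge0 (P x0); have HmQ := mnorm_ge0 Q.
set e1 := eps / 3.
set e2 := Rmin 1 (eps / (3 * (mnorm (P x0) + 1))).
set e3 := eps / (3 * (mnorm Q + 2)).
have He1 : 0 < e1 by rewrite /e1; lra.
have He2 : 0 < e2 by apply: Rmin_glb_lt; [lra|apply: Rdiv_lt_0_compat; lra].
have He3 : 0 < e3 by apply: Rdiv_lt_0_compat; lra.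
have [d1 [Hd1 G1]] := HH e1 He1.
have [d2 [Hd2 G2]] := HQ e2 He2.
have [d3 [Hd3 G3]] := HP e3 He3.
exists (Rmin d1 (Rmin d2 d3)); split; first by repeat apply: Rmin_glb_lt.
move=> y Hy.
have Hy1 : n1 (vsub y x0) < d1 by apply: Rlt_le_trans Hy (Rmin_l _ _).
have Hy2 : n1 (vsub y x0) < d2 by have := Rmin_l d2 d3; have := Rmin_r d1 (Rmin d2 d3); lra.
have Hy3 : n1 (vsub y x0) < d3 by have := Rmin_r d2 d3; have := Rmin_r d1 (Rmin d2 d3); lra.
have B1 := G1 y Hy1. have B2 := G2 y Hy2. have B3 := G3 y Hy3.
set E2 := vsub (vsub (q y) (q x0)) (mulmv Q (vsub y x0)) in B2.
have Hqd : n1 (vsub (q y) (q x0)) <= (mnorm Q + 1) * n1 (vsub y x0).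
  have -> : vsub (q y) (q x0) = vadd E2 (mulmv Q (vsub y x0)).
    apply: vext => i; rewrite /E2 /vadd /vsub; ring.
  apply: Rle_trans (n1_add _ _) _.
  have := mulmv_bound Q (vsub y x0); have := Rmin_l 1 (eps / (3 * (mnorm (P x0) + 1))).
  rewrite -/e2 => *; have := n1_ge0 (vsub y x0); nra.
have -> : vsub (vsub (mulTmv (P y) (q y)) (mulTmv (P x0) (q x0))) (mulmv (madd H1 (mmul (mtr (P x0)) Q)) (vsub y x0)) =
  vadd (vadd (vsub (vsub (mulTmv (P y) (q x0)) (mulTmv (P x0) (q x0))) (mulmv H1 (vsub y x0)))
             (mulTmv (P x0) E2))
       (mulTmv (msub (P y) (P x0)) (vsub (q y) (q x0))).
  rewrite mulmv_madd mulmv_mmul /E2 mulTmv_msub !mulTmv_sub !mulTmv_mtr !mulmv_sub.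
  apply: vext => i; rewrite /vadd /vsub; ring.
apply: Rle_trans (n1_add _ _) _.
apply: Rle_trans (Rplus_le_compat_r _ _ _ (n1_add _ _)) _.
have C2 := mulTmv_bound (P x0) E2.
have C3 := mulTmv_bound (msub (P y) (P x0)) (vsub (q y) (q x0)).
have Hn := n1_ge0 (vsub y x0).
have HE2 := n1_ge0 E2.
have Hm3 := mnorm_ge0 (msub (P y) (P x0)).
have D2 : mnorm (P x0) * n1 E2 <= eps / 3 * n1 (vsub y x0).
  apply: (Rle_trans _ ((mnorm (P x0) + 1) * n1 E2)); first nra.
  apply: Rle_trans (Rmult_le_compat_l (mnorm (P x0) + 1) _ _ ltac:(lra) B2) _.
  rewrite -Rmult_assoc; apply: Rmult_le_compat_r => //.
  have := Rmin_r 1 (eps / (3 * (mnorm (P x0) + 1))); rewrite -/e2 => Hr.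
  have := Rmult_le_compat_l (mnorm (P x0) + 1) _ _ ltac:(lra) Hr.
  replace ((mnorm (P x0) + 1) * (eps / (3 * (mnorm (P x0) + 1)))) with (eps / 3) by (field; lra). done.
have D3 : mnorm (msub (P y) (P x0)) * n1 (vsub (q y) (q x0)) <= eps / 3 * n1 (vsub y x0).
  apply: Rle_trans (Rmult_le_compat _ _ _ _ Hm3 (n1_ge0 _) (Rlt_le _ _ B3) Hqd) _.
  rewrite -Rmult_assoc; apply: Rmult_le_compat_r => //.
  rewrite /e3; apply: (Rle_trans _ (eps / (3 * (mnorm Q + 2)) * (mnorm Q + 2))).
    apply: Rmult_le_compat_l; [apply: Rlt_le; exact: He3 | lra].
  right; field; lra.
have : e1 * n1 (vsub y x0) = eps / 3 * n1 (vsub y x0) by rewrite /e1.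
have : eps / 3 * n1 (vsub y x0) + eps / 3 * n1 (vsub y x0) + eps / 3 * n1 (vsub y x0) = eps * n1 (vsub y x0) by field.
lra.
Qed.

Lemma n1_bigsum (I K : finType) (a : K -> vec I) :
  n1 (fun j => \big[Rplus/0]_(k : K) a k j) <= \big[Rplus/0]_(k : K) n1 (a k).
Proof.
rewrite /n1 sum_swap; apply: sum_le => j; exact: sum_abs.
Qed.

Lemma D1_sum (I J K : finType) (f : K -> vec I -> vec J) (L : K -> mat J I) (cf : K -> R) x :
  (forall k, D1 (f k) (L k) x) ->
  D1 (fun y j => \big[Rplus/0]_(k : K) (cf k * f k y j)) (fun j i => \big[Rplus/0]_(k : K) (cf k * L k j i)) x.
Proof.
move=> Hf eps He.
have KK := KI_pos K.
pose P := fun k d => forall y, n1 (vsub y x) < d ->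
  n1 (vsub (vsub (f k y) (f k x)) (mulmv (L k) (vsub y x))) <= eps / (KI K * (Rabs (cf k) + 1)) * n1 (vsub y x).
have Hm : forall k d d', 0 < d' <= d -> P k d -> P k d'.
  move=> k d d' Hd Pk y Hy; apply: Pk; lra.
have Hex : forall k, exists d, 0 < d /\ P k d.
  move=> k; apply: Hf; apply: Rdiv_lt_0_compat => //; have := Rabs_pos (cf k); nra.
have [d [Hd Hk]] := fin_delta Hm Hex.
exists d; split=> // y Hy.
have -> : vsub (vsub (fun j => \big[Rplus/0]_(k : K) (cf k * f k y j)) (fun j => \big[Rplus/0]_(k : K) (cf k * f k x j)))
     (mulmv (fun j i => \big[Rplus/0]_(k : K) (cf k * L k j i)) (vsub y x)) =
  fun j => \big[Rplus/0]_(k : K) (vscale (cf k) (vsub (vsub (f k y) (f k x)) (mulmv (L k) (vsub y x)))) j.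
  apply: vext => j; rewrite /vsub /vscale /mulmv -sum_sub.
  transitivity (\big[Rplus/0]_(k : K) (cf k * f k y j - cf k * f k x j) -
     \big[Rplus/0]_(k : K) (cf k * \big[Rplus/0]_(i : I) (L k j i * (y i - x i)))).
    congr (_ - _).
    transitivity (\big[Rplus/0]_(i : I) \big[Rplus/0]_(k : K) (cf k * (L k j i * (y i - x i)))).
      apply: sum_ext => i; rewrite -sum_scalr; apply: sum_ext => k; ring.
    rewrite sum_swap; apply: sum_ext => k; rewrite sum_scal //.
  rewrite -sum_sub; apply: sum_ext => k; ring.
apply: Rle_trans (n1_bigsum _) _.
apply: (Rle_trans _ (\big[Rplus/0]_(k : K) (eps / KI K * n1 (vsub y x)))).
  apply: sum_le => k; rewrite n1_scale.
  have := Hk k y Hy; have := Rabs_pos (cf k); have := n1_ge0 (vsub y x) => H0 Hc Hb.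
  apply: Rle_trans (Rmult_le_compat_l _ _ _ Hc Hb) _.
  replace (Rabs (cf k) * (eps / (KI K * (Rabs (cf k) + 1)) * n1 (vsub y x)))
    with (eps / KI K * n1 (vsub y x) * (Rabs (cf k) / (Rabs (cf k) + 1))) by (field; lra).
  rewrite -[X in _ <= X]Rmult_1_r; apply: Rmult_le_compat_l.
    apply: Rmult_le_pos => //; apply: Rlt_le; apply: Rdiv_lt_0_compat; lra.
  apply: (Rmult_le_reg_r (Rabs (cf k) + 1)); first lra.
  replace (Rabs (cf k) / (Rabs (cf k) + 1) * (Rabs (cf k) + 1)) with (Rabs (cf k)) by (field; lra). lra.
rewrite sum_const.
have := n1_ge0 (vsub y x); have := pos_INR #|K| => *.
replace (INR #|K| * (eps / KI K * n1 (vsub y x))) with (eps * n1 (vsub y x) * (INR #|K| / KI K)) by (field; lra).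
rewrite -[X in _ <= X]Rmult_1_r; apply: Rmult_le_compat_l; first nra.
apply: (Rmult_le_reg_r (KI K)) => //.
replace (INR #|K| / KI K * KI K) with (INR #|K|) by (field; lra). rewrite /KI; lra.
Qed.

Lemma core_tc (I J : finType) (F : vec I -> vec J) (M : vec I -> mat J I) x0
  (Theta : vec J -> Prop) (Omega : vec I -> Prop) rho mu0 (H : mat I I) (R0 : mat I J) :
  (forall x, D1 F (M x) x) -> contm M x0 -> (forall y, mulmv (M x0) (mulmv R0 y) = y) -> 0 < rho ->
  (forall x, n1 (vsub x x0) < rho -> (Omega x <-> Theta (F x))) ->
  D1 (fun x => mulTmv (M x) mu0) H x0 ->
  forall v vs, TCg (regular_normal Omega) x0 (mulTmv (M x0) mu0) v vs <->
   exists xi, TCg (regular_normal Theta) (F x0) mu0 (mulmv (M x0) v) xi /\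
              vs = vadd (mulmv H v) (mulTmv (M x0) xi).
Proof.
move=> HD HMc HR0 Hrho HOm HH v vs.
have [r [Hr [Hrr HMr]]] := radius_exists R0 HMc Hrho.
split.
- exact: (core_b HD HMc HR0 HOm HH Hr Hrr HMr).
- move=> [xi [Hxi ->]]; exact: (core_c HD HMc HR0 HOm HH Hr Hrr HMr Hxi).
Qed.

Lemma a_hard0 (I J : finType) (F : vec I -> vec J) (M : vec I -> mat J I) x0
  (Theta : vec J -> Prop) (Omega : vec I -> Prop) rho (R0 : mat I J) vs :
  (forall x, D1 F (M x) x) -> contm M x0 -> (forall y, mulmv (M x0) (mulmv R0 y) = y) -> 0 < rho ->
  (forall x, n1 (vsub x x0) < rho -> (Omega x <-> Theta (F x))) ->
  regular_normal Omega x0 vs -> exists mu, regular_normal Theta (F x0) mu /\ vs = mulTmv (M x0) mu.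
Proof.
move=> HD HMc HR0 Hrho HOm Hvs.
have [r [Hr [Hrr HMr]]] := radius_exists R0 HMc Hrho.
apply: (a_hard HD HR0 HOm Hr Hrr HMr) => //.
apply: x0_ball; lra.
Qed.

Lemma dot_sym_mat (I : finType) (Hm : mat I I) : (forall i j, Hm i j = Hm j i) ->
  forall u v, dot (mulmv Hm u) v = dot u (mulmv Hm v).
Proof.
move=> Hs u v; rewrite dot_mulmv; congr dot; apply: vext => i.
rewrite /mulTmv /mulmv; apply: sum_ext => j; rewrite Hs //.
Qed.

Lemma mulmv_mtr (I J : finType) (A : mat J I) y : mulmv (mtr A) y = mulTmv A y.
Proof. by []. Qed.

Lemma dot_oppr (I : finType) (u w : vec I) : dot u (vopp w) = - dot u w.
Proof. by rewrite dot_sym dot_oppl dot_sym. Qed.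

Section Final.
Variables (I S D : finType) (A : mat S I) (B : mat D S) (Hg : mat I I) (Hh : mat S S)
  (TQ : vec D -> vec D -> Prop) (Rc : mat I D).
Hypothesis Hgs : forall i j, Hg i j = Hg j i.
Hypothesis Hhs : forall i j, Hh i j = Hh j i.
Hypothesis HT0 : TQ vzero vzero.
Hypothesis HRc : forall y, mulmv (mmul B A) (mulmv Rc y) = y.

Local Notation C := (mmul B A).
Local Notation HF := (madd Hg (mmul (mtr A) (mmul Hh A))).

Lemma HF_entry i j : HF i j = HF j i.
Proof.
rewrite /madd /mmul /mtr Hgs; congr (_ + _).
transitivity (\big[Rplus/0]_(k : S) \big[Rplus/0]_(l : S) (A k i * Hh k l * A l j)).
  apply: sum_ext => k; rewrite -sum_scal; apply: sum_ext => l; ring.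
transitivity (\big[Rplus/0]_(k : S) \big[Rplus/0]_(l : S) (A k j * Hh k l * A l i)); last first.
  apply: sum_ext => k; rewrite -sum_scal; apply: sum_ext => l; ring.
rewrite sum_swap; apply: sum_ext => k; apply: sum_ext => l; rewrite Hhs; ring.
Qed.

Lemma HF_sym u v : dot (mulmv HF u) v = dot u (mulmv HF v).
Proof. exact: (dot_sym_mat HF_entry u v). Qed.

Lemma dot_opp_add (J : finType) (w X Y : vec J) : dot (vopp w) (vadd X Y) = - dot w X - dot w Y.
Proof. rewrite dot_oppl dot_addr; ring. Qed.

Lemma final_algebra w us :
 (forall v vs, (exists xi, TQ (mulmv C v) xi /\ vs = vadd (mulmv HF v) (mulTmv C xi)) ->
     dot us v + dot (vopp w) vs <= 0)
 <-> exists y, (forall z eta, (exists xi, TQ (mulmv B z) xi /\ eta = vadd (mulmv Hh z) (mulTmv B xi)) ->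
        dot y z + dot (vopp (mulmv A w)) eta <= 0) /\ us = vadd (mulmv Hg w) (mulTmv A y).
Proof.
split.
- move=> G.
  set p := vsub us (mulmv HF w).
  have G' : forall v xi, TQ (mulmv C v) xi -> dot p v - dot (mulmv C w) xi <= 0.
    move=> v xi HQ.
    have := G v _ (ex_intro _ xi (conj HQ erefl)).
    rewrite dot_opp_add.
    have e2 : dot w (mulmv HF v) = dot (mulmv HF w) v by rewrite HF_sym.
    have e3 : dot (mulmv C w) xi = dot w (mulTmv C xi) by rewrite dot_mulmv.
    have e4 : dot p v = dot us v - dot (mulmv HF w) v by rewrite /p dot_subl.
    lra.
  have Hker : forall v, mulmv C v = vzero -> dot p v = 0.
    move=> v Hv.
    have H1 := G' v vzero ltac:(rewrite Hv //).
    have Hv' : mulmv C (vopp v) = vzero by rewrite mulmv_opp Hv; apply: vext => i; rewrite /vopp /vzero; ring.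
    have H2 := G' (vopp v) vzero ltac:(rewrite Hv' //).
    rewrite dot_zeror in H1 H2; rewrite dot_oppr in H2; lra.
  set nu := mulTmv Rc p.
  have Hp : p = mulTmv C nu.
    apply: vext => i.
    rewrite -(dot_ev p i) -(dot_ev (mulTmv C nu) i).
    have E := Hker (vsub (ev i) (mulmv Rc (mulmv C (ev i)))).
    rewrite mulmv_sub HRc dot_subr in E.
    have E0 : vsub (mulmv C (ev i)) (mulmv C (ev i)) = vzero by apply: vext => j; rewrite /vsub /vzero; ring.
    have E1 := E E0.
    have E2 : dot (mulTmv C nu) (ev i) = dot p (mulmv Rc (mulmv C (ev i))).
      by rewrite dot_mulTmv /nu dot_mulTmv.
    lra.
  exists (vadd (mulmv Hh (mulmv A w)) (mulTmv B nu)); split.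
  + move=> z eta [xi [HQ ->]].
    set v' := mulmv Rc (mulmv B z).
    have Hv' : mulmv C v' = mulmv B z by rewrite /v' HRc.
    have Hle := G' v' xi ltac:(rewrite Hv' //).
    have f1 : dot p v' = dot nu (mulmv B z) by rewrite Hp dot_mulTmv Hv'.
    have f2 : dot (vadd (mulmv Hh (mulmv A w)) (mulTmv B nu)) z =
              dot (mulmv Hh (mulmv A w)) z + dot nu (mulmv B z) by rewrite dot_addl dot_mulTmv.
    have f3 : dot (vopp (mulmv A w)) (vadd (mulmv Hh z) (mulTmv B xi)) =
              - dot (mulmv A w) (mulmv Hh z) - dot (mulmv A w) (mulTmv B xi) by rewrite dot_opp_add.
    have f4 : dot (mulmv A w) (mulmv Hh z) = dot (mulmv Hh (mulmv A w)) z by rewrite (dot_sym_mat Hhs).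
    have f5 : dot (mulmv A w) (mulTmv B xi) = dot (mulmv C w) xi by rewrite mulmv_mmul [RHS]dot_mulmv.
    rewrite f2 f3 f4 f5; lra.
  + have -> : us = vadd (mulmv HF w) p by rewrite /p; apply: vext => i; rewrite /vadd /vsub; ring.
    rewrite Hp mulTmv_add mulmv_madd mulmv_mmul mulmv_mtr mulTmv_mmul.
    rewrite mulmv_mmul; apply: vext => i; rewrite /vadd; ring.
- move=> [y [Hpol Hus]] v vs [xi [HQ ->]].
  have Hle := Hpol (mulmv A v) (vadd (mulmv Hh (mulmv A v)) (mulTmv B xi))
    (ex_intro _ xi (conj (eq_ind _ (fun a => TQ a xi) HQ _ (mulmv_mmul B A v)) erefl)).
  rewrite dot_opp_add in Hle *.
  have g1 : dot us v = dot (mulmv Hg w) v + dot y (mulmv A v) by rewrite Hus dot_addl dot_mulTmv.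
  have g2 : dot w (mulmv HF v) = dot w (mulmv Hg v) + dot (mulmv A w) (mulmv Hh (mulmv A v)).
    rewrite mulmv_madd dot_addr mulmv_mmul mulmv_mtr; congr (_ + _).
    by rewrite -dot_mulmv mulmv_mmul.
  have g3 : dot (mulmv Hg w) v = dot w (mulmv Hg v) by rewrite (dot_sym_mat Hgs).
  have g4 : dot w (mulTmv C xi) = dot (mulmv A w) (mulTmv B xi) by rewrite -dot_mulmv mulmv_mmul dot_mulmv.
  rewrite dot_opp_add g1 g2 g4; lra.
Qed.

End Final.

Lemma dot_vpair (I J : finType) (a c : vec I) (b d : vec J) :
  dot (vpair a b) (vpair c d) = dot a c + dot b d.
Proof. by rewrite /dot sum_sumType. Qed.

Lemma vpair_eta (I J : finType) (p : vec (I + J)%type) :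
  p = vpair (fun i => p (inl i)) (fun j => p (inr j)).
Proof. by apply: vext => -[i|j]. Qed.

Lemma polar_pair (I J : finType) (S : vec I -> vec J -> Prop) a b p q :
  polar (tangent_cone (gph S) (vpair a b)) (vpair p q) <->
  forall v vs, TCg S a b v vs -> dot p v + dot q vs <= 0.
Proof.
split.
- move=> H v vs HT; rewrite -dot_vpair; apply: H; exact/TCg_iff.
- move=> H w Hw; rewrite (vpair_eta w) dot_vpair; apply: H.
  apply/TCg_iff; rewrite -vpair_eta //.
Qed.

Lemma TQ0 (I J : finType) (S : vec I -> vec J -> Prop) a b : S a b -> TCg S a b vzero vzero.
Proof.
move=> Hab; apply/TCg_iff.
have -> : vpair (@vzero I) (@vzero J) = vzero by apply: vext => -[i|j].
exact: (zero_tc (S := gph S)).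
Qed.

Theorem mainTheorem6 (n s d : nat)
    (g : vec 'I_n -> vec 'I_s) (D : vec 'I_s -> Prop) (xbar : vec 'I_n)
    (Theta : vec 'I_d -> Prop) (h : vec 'I_s -> vec 'I_d) (V : vec 'I_s -> Prop)
    (Jg : mat 'I_s 'I_n) (Jh : mat 'I_d 'I_s)
    (xstar : vec 'I_n) (lam : vec 'I_s) (Hess : mat 'I_n 'I_n) :
  C2 g ->
  is_closed D ->
  D (g xbar) ->
  (* (A1) *)
  is_closed Theta ->
  C2 h ->
  is_neighborhood V (g xbar) ->
  deriv_at h Jh (g xbar) ->
  (forall y : vec 'I_d, exists z : vec 'I_s, mulmv Jh z = y) ->
  (forall z, (D z /\ V z) <-> (V z /\ Theta (h z))) ->
  (* (A2) *)
  deriv_at g Jg xbar ->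
  (forall z : vec 'I_s, exists (u : vec 'I_n) (k : vec 'I_s),
      mulmv Jh k = vzero /\ z = vadd (mulmv Jg u) k) ->
  (* xbar^* and lambda-bar *)
  regular_normal (fun x => D (g x)) xbar xstar ->
  regular_normal D (g xbar) lam ->
  mulTmv Jg lam = xstar ->
  is_hessian (fun x => dot lam (g x)) Hess xbar ->
  forall (w : vec 'I_n) (ustar : vec 'I_n),
    regular_coderiv (regular_normal (fun x => D (g x))) xbar xstar w ustar
    <->
    exists y : vec 'I_s,
      regular_coderiv (regular_normal D) (g xbar) lam (mulmv Jg w) y /\
      ustar = vadd (mulmv Hess w) (mulTmv Jg y).

Proof.
move=> [Jgf [Kg [HJg [HKg _]]]] HDcl HDg HThcl [Jhf [Kh [HJh [HKh _]]]] HVn HJh0 Hsurj HA1 HJg0 HA2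
  Hxs Hlam Hxl HHess w ustar.
have Dg : forall x, D1 g (Jgf x) x by move=> x; apply/deriv_D1.
have Dh : forall z, D1 h (Jhf z) z by move=> z; apply/deriv_D1.
have EJg : Jg = Jgf xbar by apply: (D1_unique (f := g) (x := xbar)); [apply/deriv_D1|exact: Dg].
have EJh : Jh = Jhf (g xbar) by apply: (D1_unique (f := h) (x := g xbar)); [apply/deriv_D1|exact: Dh].
subst Jg Jh.
have cJg : forall x, contm Jgf x.
  move=> x; apply: contm_rows => k; apply: (D1_cont (A := Kg x k)); apply/deriv_D1; exact: HKg.
have cJh : forall x, contm Jhf x.
  move=> x; apply: contm_rows => k; apply: (D1_cont (A := Kh x k)); apply/deriv_D1; exact: HKh.
set gb := g xbar.
have [r0 [Hr0 HV]] := HVn.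
have HOmD : forall z, n1 (vsub z gb) < r0 -> (D z <-> Theta (h z)).
  move=> z Hz; have Vz : V z by apply: HV; apply: Rle_lt_trans (vnorm_le_n1 _) Hz.
  have := HA1 z; tauto.
have [R0h HR0h] := rinv_exists Hsurj.
have [mu [Hmu Hlm]] := a_hard0 (Theta := Theta) Dh (cJh gb) HR0h Hr0 HOmD Hlam.
pose Hh : mat 'I_s 'I_s := fun j i => \big[Rplus/0]_(k : 'I_d) (mu k * Kh gb k j i).
have DHh : D1 (fun z => mulTmv (Jhf z) mu) Hh gb.
  have := D1_sum (f := fun k y j => Jhf y k j) (L := fun k => Kh gb k) mu (x := gb)
    (fun k => proj1 (deriv_D1 _ _ _) (HKh gb k)).
  apply: D1_ext => y; apply: vext => j; rewrite /mulTmv; apply: sum_ext => k; ring.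
have gradh : forall y, D1 (fun z (_ : unit) => dot mu (h z)) (fun _ j => mulTmv (Jhf y) mu j) y.
  move=> y; have := D1_lin_left (fun (_ : unit) j => mu j) (Dh y).
  have -> : mmul (fun (_ : unit) j => mu j) (Jhf y) = (fun _ j => mulTmv (Jhf y) mu j).
    apply: mext => u j; rewrite /mmul /mulTmv; apply: sum_ext => k; ring.
  done.
have Hhs : forall i j, Hh i j = Hh j i := schwarz gradh DHh.
have [G [HG HG']] := HHess.
have DG : forall y, D1 (fun z (_ : unit) => dot lam (g z)) (fun _ j => G y j) y.
  move=> y; apply/deriv_D1; exact: HG.
have DHess : D1 G Hess xbar by apply/deriv_D1.
have Hgs : forall i j, Hess i j = Hess j i := schwarz DG DHess.
have EG : forall y, G y = mulTmv (Jgf y) lam.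
  move=> y.
  have E := D1_unique (DG y) (D1_lin_left (fun (_ : unit) j => lam j) (Dg y)).
  apply: vext => j; have := f_equal (fun m => m tt j) E; rewrite /mmul /mulTmv => ->.
  apply: sum_ext => k; ring.
have DHess' : D1 (fun x => mulTmv (Jgf x) lam) Hess xbar.
  apply: D1_ext DHess => y; by rewrite EG.
have [dl [Hdl Hgl]] := D1_cont (Dg xbar) Hr0.
have HOmG : forall x, n1 (vsub x xbar) < dl -> (D (g x) <-> Theta (h (g x))).
  move=> x Hx; exact: HOmD (Hgl x Hx).
pose M := fun x => mmul (Jhf (g x)) (Jgf x).
have DF : forall x, D1 (fun y => h (g y)) (M x) x by move=> x; exact: D1_comp (Dg x) (Dh (g x)).
have cM : contm M xbar by apply: contm_mmul; [apply: contm_comp; [exact: cJh| exact: D1_cont (Dg xbar)]|exact: cJg].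
have Hsurj2 : forall y : vec 'I_d, exists u, mulmv (M xbar) u = y.
  move=> y; have [z Hz] := Hsurj y; have [u [k [Hk Hzk]]] := HA2 z.
  exists u; rewrite /M mulmv_mmul -Hz Hzk mulmv_add Hk; apply: vext => i; rewrite /vadd /vzero; ring.
have [RF HRF] := rinv_exists Hsurj2.
pose lamf := fun x => mulTmv (Jhf (g x)) mu.
have Dlam : D1 lamf (mmul Hh (Jgf xbar)) xbar by exact: D1_comp (Dg xbar) DHh.
have Elam : lamf xbar = lam by rewrite /lamf -/gb Hlm.
have DHF : D1 (fun x => mulTmv (M x) mu) (madd Hess (mmul (mtr (Jgf xbar)) (mmul Hh (Jgf xbar)))) xbar.
  have := D1_prod (P := Jgf) (q := lamf) (cJg xbar) ltac:(rewrite Elam; exact: DHess') Dlam.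
  apply: D1_ext => y; by rewrite /M mulTmv_mmul.
have coreD := core_tc Dh (cJh gb) HR0h Hr0 HOmD DHh.
have coreG := core_tc DF cM HRF Hdl HOmG DHF.
have Exs : mulTmv (M xbar) mu = xstar by rewrite /M mulTmv_mmul -/gb -Hlm.
rewrite Exs in coreG. rewrite -Hlm in coreD.
have HRF' : forall y, mulmv (mmul (Jhf gb) (Jgf xbar)) (mulmv RF y) = y by exact: HRF.
have FA := final_algebra (TQ := TCg (regular_normal Theta) (h gb) mu) Hgs Hhs (TQ0 Hmu) HRF' w ustar.
have PG : polar (tangent_cone (gph (regular_normal (fun x => D (g x)))) (vpair xbar xstar)) (vpair ustar (vopp w)) <->
  (forall v vs, (exists xi, TCg (regular_normal Theta) (h gb) mu (mulmv (mmul (Jhf gb) (Jgf xbar)) v) xi /\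
      vs = vadd (mulmv (madd Hess (mmul (mtr (Jgf xbar)) (mmul Hh (Jgf xbar)))) v) (mulTmv (mmul (Jhf gb) (Jgf xbar)) xi)) ->
    dot ustar v + dot (vopp w) vs <= 0).
  rewrite polar_pair; split=> H v vs HT; apply: H; exact/coreG.
have PD : forall y, polar (tangent_cone (gph (regular_normal D)) (vpair gb lam)) (vpair y (vopp (mulmv (Jgf xbar) w))) <->
  (forall z eta, (exists xi, TCg (regular_normal Theta) (h gb) mu (mulmv (Jhf gb) z) xi /\ eta = vadd (mulmv Hh z) (mulTmv (Jhf gb) xi)) ->
     dot y z + dot (vopp (mulmv (Jgf xbar) w)) eta <= 0).
  move=> y; rewrite polar_pair; split=> H v vs HT; apply: H; exact/coreD.
rewrite /regular_coderiv; split.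
- move=> [_ Hp]; have [y [Hy Hus]] := proj1 FA (proj1 PG Hp).
  exists y; split=> //; split; first exact: Hlam.
  exact: (proj2 (PD y) Hy).
- move=> [y [[_ Hy] Hus]]; split; first exact: Hxs.
  apply/PG; apply/FA; exists y; split=> //; exact: (proj1 (PD y) Hy).
Qed.
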